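(* Let $M,N$ be integers with $N\ge0$, and let $\phi\in\mathcal{D}_N^M$ be a refinable function with $\widehat\phi(0)\ne0$. Then there exist complex numbers $h_k$, $k=0,\dots,p^{N+1}-1$, with $\phi(x)=\sum_{k=0}^{p^{N+1}-1}h_k\phi\big(\frac{x}{p}-\frac{k}{p^{N+1}}\big)$ for all $x\in\mathbb{Q}_p$, and for $m_0(\xi)=\frac1p\sum_{k=0}^{p^{N+1}-1}h_k\chi_p(k\xi)$ one has $$\widehat\phi(\xi)=\widehat\phi(0)\prod_{j=0}^{\infty}m_0\Big(\frac{\xi}{p^{N-j}}\Big)\qquad\text{for all }\xi\in\mathbb{Q}_p .$$
   Context: $p$ is a prime, $\mathbb{Q}_p$ the field of $p$-adic numbers with norm $|\cdot|_p$. The fractional part of $x=p^{\gamma}\sum_{j\ge0}x_jp^j$ ($x_j\in\{0,\dots,p-1\}$, $x_0\ne0$) is $\{x\}_p=p^{\gamma}\sum_{j=0}^{-\gamma-1}x_jp^j$, $\{0\}_p=0$; $\chi_p(x)=e^{2\pi i\{x\}_p}$; $I_p=\{a:\{a\}_p=a\}$; $B_\gamma(a)=\{x:|x-a|_p\le p^\gamma\}$. $dx$ is Haar measure with $B_0(0)$ of measure 1, and $\widehat f(\xi)=\int\chi_p(\xi x)f(x)\,dx$. A test function is a locally constant compactly supported complex function on $\mathbb{Q}_p$ (locally constant: for each $x$ there is $l\in\mathbb{Z}$ with $f(x+y)=f(x)$ for all $y\in B_l(0)$). $\mathcal{D}_N^M$ denotes the set of test functions $\phi$ that are $p^M$-periodic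 ($\phi(x+p^M)=\phi(x)$ for all $x$) and supported in $B_N(0)$; equivalently, locally constant $\phi$ with $\operatorname{supp}\phi\subset B_N(0)$ and $\operatorname{supp}\widehat\phi\subset B_M(0)$. A function $\phi\in L^2(\mathbb{Q}_p)$ is refinable if $\phi(x)=\sum_{a\in I_p}\alpha_a\phi(p^{-1}x-a)$ for some complex $\alpha_a$ (convergence in $L^2$). *)

(* Defs.v *)
From Stdlib Require Import Reals ZArith List Znumtheory Classical ClassicalEpsilon.
From Coquelicot Require Import Coquelicot.
Open Scope R_scope.

(* ---------- p-adic numbers as digit expansions ----------
   x = sum_{j in Z} d_j p^j, digits 0 <= d_j < p, d_j = 0 for j << 0. *)

Definition is_digits (p : positive) (d : Z -> Z) : Prop :=
  (forall j, (0 <= d j < Zpos p)%Z) /\ exists L : Z, forall j, (j < L)%Z -> d j = 0%Z.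

Definition Qp (p : positive) : Type := {d : Z -> Z | is_digits p d}.

Definition digit {p} (x : Qp p) (j : Z) : Z := proj1_sig x j.

Lemma zero_is_digits (p : positive) : is_digits p (fun _ => 0%Z).
Proof.
split; [intros j; split; [apply Z.le_refl | reflexivity] | exists 0%Z; reflexivity].
Qed.

Definition zeroQp (p : positive) : Qp p := exist _ (fun _ => 0%Z) (zero_is_digits p).

Definition pw (p : positive) (e : Z) : R := powerRZ (IZR (Zpos p)) e.

Definition zsum (a b : Z) (f : Z -> R) : R :=
  fold_right Rplus 0 (map (fun k => f (a + Z.of_nat k)%Z) (seq 0 (Z.to_nat (b - a)))).

Definition lowb {p} (x : Qp p) : Z :=
  proj1_sig (constructive_indefinite_description _ (proj2 (proj2_sig x))).

Definition trunc {p} (n : Z) (x : Qp p) : R :=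
  zsum (lowb x) n (fun j => IZR (digit x j) * pw p j).

(* digit j of a number congruent to A j modulo p^(j+1) Z_p *)
Definition dig_of (p : positive) (A : Z -> R) (j : Z) : Z :=
  Z.modulo (Int_part (A j / pw p j)) (Zpos p).

Definition mkQp (p : positive) (A : Z -> R) : Qp p :=
  match excluded_middle_informative (is_digits p (dig_of p A)) with
  | left H => exist _ (dig_of p A) H
  | right _ => zeroQp p
  end.

Definition addQp {p} (x y : Qp p) : Qp p :=
  mkQp p (fun j => trunc (j + 1) x + trunc (j + 1) y).
Definition subQp {p} (x y : Qp p) : Qp p :=
  mkQp p (fun j => trunc (j + 1) x - trunc (j + 1) y).
Definition mulQp {p} (x y : Qp p) : Qp p :=
  mkQp p (fun j => trunc (j + 1 - lowb y) x * trunc (j + 1 - lowb x) y).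

Definition ofZp (p : positive) (k e : Z) : Qp p := mkQp p (fun _ => IZR k * pw p e).

Definition normQp {p} (x : Qp p) : R :=
  match excluded_middle_informative
          (exists v, digit x v <> 0%Z /\ forall j, (j < v)%Z -> digit x j = 0%Z) with
  | left H => pw p (- proj1_sig (constructive_indefinite_description _ H))
  | right _ => 0
  end.

Definition ball_p {p} (g : Z) (a x : Qp p) : Prop := normQp (subQp x a) <= pw p g.

Definition fracR {p} (x : Qp p) : R := trunc 0 x.
Definition fracQp {p} (x : Qp p) : Qp p := mkQp p (fun _ => fracR x).

Definition in_Ip {p} (a : Qp p) : Prop := fracQp a = a.

Definition chi {p} (x : Qp p) : C := (cos (2 * PI * fracR x), sin (2 * PI * fracR x)).

Definition locally_const {p} (f : Qp p -> C) : Prop :=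
  forall x, exists l : Z, forall y, ball_p l (zeroQp p) y -> f (addQp x y) = f x.

(* compact support = support contained in some ball B_R(0) *)
Definition test_fun {p} (f : Qp p -> C) : Prop :=
  locally_const f /\ exists R : Z, forall x, f x <> 0%C -> ball_p R (zeroQp p) x.

Definition in_D (p : positive) (N M : Z) (f : Qp p -> C) : Prop :=
  test_fun f /\
  (forall x, f (addQp x (ofZp p 1 M)) = f x) /\
  (forall x, f x <> 0%C -> ball_p N (zeroQp p) x).

(* ---------- Haar integral of test functions ----------
   If f vanishes outside B_R(0) and is constant on cosets of B_l(0), then
   int f dx = p^l * sum over representatives n p^(-R), 0 <= n < p^(R-l). *)
Definition sumC (l : list C) : C := fold_right Cplus 0%C l.

Definition good_pair {p} (f : Qp p -> C) (Rl : Z * Z) : Prop :=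
  (snd Rl <= fst Rl)%Z /\
  (forall x, f x <> 0%C -> ball_p (fst Rl) (zeroQp p) x) /\
  (forall x y, ball_p (snd Rl) y x -> f x = f y).

Definition riemann_sum {p} (f : Qp p -> C) (Rl : Z * Z) : C :=
  (RtoC (pw p (snd Rl)) *
   sumC (map (fun n => f (ofZp p (Z.of_nat n) (- fst Rl)))
             (seq 0 (Z.to_nat (Zpos p ^ (fst Rl - snd Rl))%Z))))%C.

Definition integral {p} (f : Qp p -> C) : C :=
  match excluded_middle_informative (exists Rl, good_pair f Rl) with
  | left H => riemann_sum f (proj1_sig (constructive_indefinite_description _ H))
  | right _ => 0%C
  end.

Definition ft {p} (f : Qp p -> C) (xi : Qp p) : C :=
  integral (fun x => (chi (mulQp xi x) * f x)%C).

Definition l2norm {p} (f : Qp p -> C) : R :=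
  sqrt (Re (integral (fun x => RtoC (Cmod (f x) ^ 2)))).

(* refinable: phi = sum_{a in I_p} alpha_a phi(p^{-1} x - a), the series being
   (unconditionally) convergent in L^2 *)
Definition refinable {p} (phi : Qp p -> C) : Prop :=
  exists alpha : Qp p -> C,
  forall eps : R, 0 < eps ->
  exists F : list (Qp p), NoDup F /\ (forall a, In a F -> in_Ip a) /\
  forall G : list (Qp p), NoDup G -> (forall a, In a G -> in_Ip a) -> incl F G ->
    l2norm (fun x => (phi x - sumC (map (fun a =>
              alpha a * phi (subQp (mulQp (ofZp p 1 (-1)) x) a)) G))%C) < eps.

Definition ncoef (p : positive) (N : Z) : nat := Z.to_nat (Zpos p ^ (N + 1)).

Definition m0 (p : positive) (N : Z) (h : nat -> C) (xi : Qp p) : C :=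
  (RtoC (/ IZR (Zpos p)) *
   sumC (map (fun k => h k * chi (mulQp (ofZp p (Z.of_nat k) 0) xi)) (seq 0 (ncoef p N))))%C.

Definition prodC (n : nat) (f : nat -> C) : C :=
  fold_right Cmult 1%C (map f (seq 0 n)).

(* Main.v *)
Require Import Defs.
From Stdlib Require Import Reals ZArith List Znumtheory.
From Coquelicot Require Import Coquelicot.
From Stdlib Require Import Lia Lra ProofIrrelevance FunctionalExtensionality Classical ClassicalEpsilon.
Open Scope R_scope.

Section QP.
Variable p : positive.
Hypothesis hp : (1 < Zpos p)%Z.

Local Notation P := (IZR (Zpos p)).
Lemma P_gt1 : 1 < P.
Proof. apply IZR_lt. exact hp. Qed.
Lemma P_neq0 : P <> 0.
Proof. pose proof P_gt1. lra. Qed.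

Lemma pw_add a b : pw p (a + b) = pw p a * pw p b.
Proof. unfold pw. apply powerRZ_add. apply P_neq0. Qed.
Lemma pw_pos e : 0 < pw p e.
Proof. unfold pw. apply powerRZ_lt. pose proof P_gt1. lra. Qed.
Lemma pw_0 : pw p 0 = 1.
Proof. reflexivity. Qed.
Lemma pw_1 : pw p 1 = P.
Proof. unfold pw. simpl. ring. Qed.
Lemma pw_nat e : (0 <= e)%Z -> pw p e = IZR (Zpos p ^ e).
Proof.
  intros He. destruct e as [|e|e]; try lia.
  - reflexivity.
  - unfold pw. rewrite <- Zpower_pos_powerRZ. reflexivity.
Qed.
Lemma pw_opp e : pw p (- e) = / pw p e.
Proof.
  apply (Rmult_eq_reg_l (pw p e)); [|pose proof (pw_pos e); lra].
  rewrite <- pw_add. rewrite Rinv_r by (pose proof (pw_pos e); lra).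
  replace (e + - e)%Z with 0%Z by lia. reflexivity.
Qed.
Lemma pw_ge1 e : (0 <= e)%Z -> 1 <= pw p e.
Proof.
  intros He. rewrite pw_nat by lia. apply IZR_le.
  assert (0 < Zpos p ^ e)%Z by (apply Z.pow_pos_nonneg; lia). lia.
Qed.
Lemma pw_gt1 e : (0 < e)%Z -> P <= pw p e.
Proof.
  intros He. replace e with (1 + (e - 1))%Z by lia. rewrite pw_add, pw_1.
  pose proof (pw_ge1 (e-1) ltac:(lia)). pose proof P_gt1. nra.
Qed.
Lemma pw_lt a b : (a < b)%Z -> pw p a < pw p b.
Proof.
  intros H. replace b with (a + (b - a))%Z by lia. rewrite pw_add.
  pose proof (pw_gt1 (b - a) ltac:(lia)). pose proof (pw_pos a). pose proof P_gt1. nra.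
Qed.
Lemma pw_le a b : (a <= b)%Z -> pw p a <= pw p b.
Proof. intros H. destruct (Z.eq_dec a b). subst; lra. left; apply pw_lt; lia. Qed.
Lemma pw_le_inv a b : pw p a <= pw p b -> (a <= b)%Z.
Proof. intros H. destruct (Z_le_gt_dec a b); auto. pose proof (pw_lt b a ltac:(lia)). lra. Qed.

Definition inZ (k : Z) (r : R) : Prop := exists z : Z, r = IZR z * pw p k.
Definition cong (k : Z) (u v : R) : Prop := inZ k (u - v).

Lemma inZ_0 k : inZ k 0.
Proof. exists 0%Z. ring. Qed.
Lemma inZ_add k u v : inZ k u -> inZ k v -> inZ k (u + v).
Proof. intros [a Ha] [b Hb]. exists (a + b)%Z. subst. rewrite plus_IZR. ring. Qed.
Lemma inZ_opp k u : inZ k u -> inZ k (- u).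
Proof. intros [a Ha]. exists (- a)%Z. subst. rewrite opp_IZR. ring. Qed.
Lemma inZ_sub k u v : inZ k u -> inZ k v -> inZ k (u - v).
Proof. intros. unfold Rminus. apply inZ_add; auto. apply inZ_opp; auto. Qed.
Lemma inZ_mul a b u v : inZ a u -> inZ b v -> inZ (a + b) (u * v).
Proof. intros [x Hx] [y Hy]. exists (x * y)%Z. subst. rewrite mult_IZR, pw_add. ring. Qed.
Lemma inZ_weak m k r : (m <= k)%Z -> inZ k r -> inZ m r.
Proof.
  intros H [z Hz]. exists (z * Zpos p ^ (k - m))%Z. subst.
  rewrite mult_IZR, <- pw_nat by lia.
  replace k with (m + (k - m))%Z at 1 by lia. rewrite pw_add. ring.
Qed.
Lemma inZ_int z : inZ 0 (IZR z).
Proof. exists z. rewrite pw_0. ring. Qed.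
Lemma inZ_pw e : inZ e (pw p e).
Proof. exists 1%Z. ring. Qed.
Lemma inZ_zpw z e : inZ e (IZR z * pw p e).
Proof. exists z. ring. Qed.

Lemma cong_refl k u : cong k u u.
Proof. unfold cong. replace (u - u) with 0 by ring. apply inZ_0. Qed.
Lemma cong_sym k u v : cong k u v -> cong k v u.
Proof. unfold cong. intros H. replace (v - u) with (- (u - v)) by ring. apply inZ_opp; auto. Qed.
Lemma cong_trans k u v w : cong k u v -> cong k v w -> cong k u w.
Proof. unfold cong. intros. replace (u - w) with ((u - v) + (v - w)) by ring. apply inZ_add; auto. Qed.
Lemma cong_add k u v u' v' : cong k u v -> cong k u' v' -> cong k (u + u') (v + v').
Proof. unfold cong. intros. replace (u + u' - (v + v')) with ((u - v) + (u' - v')) by ring. apply inZ_add; auto. Qed.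
Lemma cong_sub k u v u' v' : cong k u v -> cong k u' v' -> cong k (u - u') (v - v').
Proof. unfold cong. intros. replace (u - u' - (v - v')) with ((u - v) - (u' - v')) by ring. apply inZ_sub; auto. Qed.
Lemma cong_mul a b w u v : inZ a w -> cong b u v -> cong (a + b) (w * u) (w * v).
Proof. unfold cong. intros. replace (w * u - w * v) with (w * (u - v)) by ring. apply inZ_mul; auto. Qed.
Lemma cong_weak m k u v : (m <= k)%Z -> cong k u v -> cong m u v.
Proof. unfold cong. intros. eapply inZ_weak; eauto. Qed.
Lemma cong_eqR k u v : u = v -> cong k u v.
Proof. intros ->. apply cong_refl. Qed.
Lemma cong_inZ k u v : cong k u v -> inZ k v -> inZ k u.
Proof. unfold cong. intros H1 H2. replace u with ((u - v) + v) by ring. apply inZ_add; auto. Qed.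

Lemma cong_eq k u v : 0 <= u < pw p k -> 0 <= v < pw p k -> cong k u v -> u = v.
Proof.
  intros Hu Hv [z Hz].
  assert (IZR z < 1 /\ -1 < IZR z) as [H1 H2].
  { pose proof (pw_pos k). split.
    - apply (Rmult_lt_reg_r (pw p k)); auto. nra.
    - apply (Rmult_lt_reg_r (pw p k)); auto. nra. }
  apply lt_IZR in H1. replace (-1) with (IZR (-1)) in H2 by reflexivity. apply lt_IZR in H2.
  assert (z = 0%Z) by lia. subst. lra.
Qed.


Definition T (n : Z) (x : Qp p) : R := trunc n x.

Lemma lowb_spec (x : Qp p) j : (j < lowb x)%Z -> digit x j = 0%Z.
Proof.
  unfold lowb. destruct (constructive_indefinite_description _ _) as [L HL]. simpl. apply HL.
Qed.
Lemma digit_range (x : Qp p) j : (0 <= digit x j < Zpos p)%Z.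
Proof. unfold digit. destruct (proj2_sig x) as [Hd _]. apply Hd. Qed.

Lemma fold_Rplus_shift l a : fold_right Rplus a l = fold_right Rplus 0 l + a.
Proof. induction l; simpl. ring. rewrite IHl. ring. Qed.

Lemma zsum_low a b f : (b <= a)%Z -> zsum a b f = 0.
Proof. intros H. unfold zsum. replace (Z.to_nat (b - a)) with 0%nat by lia. reflexivity. Qed.
Lemma zsum_step a b f : (a <= b)%Z -> zsum a (b + 1) f = zsum a b f + f b.
Proof.
  intros H. unfold zsum. replace (Z.to_nat (b + 1 - a)) with (S (Z.to_nat (b - a))) by lia.
  rewrite seq_S, map_app, fold_right_app. simpl. rewrite fold_Rplus_shift.
  rewrite Rplus_0_r. f_equal. f_equal. lia.
Qed.

Lemma T_low (x : Qp p) n : (n <= lowb x)%Z -> T n x = 0.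
Proof. intros. unfold T, trunc. apply zsum_low. auto. Qed.

Lemma T_step (x : Qp p) n : T (n + 1) x = T n x + IZR (digit x n) * pw p n.
Proof.
  unfold T, trunc. destruct (Z_le_gt_dec (lowb x) n).
  - rewrite zsum_step; auto.
  - rewrite !zsum_low by lia. rewrite lowb_spec by lia. simpl. ring.
Qed.

Lemma Zind_from (b : Z) (Q : Z -> Prop) :
  (forall n, (n <= b)%Z -> Q n) -> (forall n, (b <= n)%Z -> Q n -> Q (n + 1)%Z) -> forall n, Q n.
Proof.
  intros H0 HS n. destruct (Z_le_gt_dec n b). auto.
  replace n with (b + Z.of_nat (Z.to_nat (n - b)))%Z by lia.
  generalize (Z.to_nat (n - b)). induction n0.
  - apply H0. lia.
  - replace (b + Z.of_nat (S n0))%Z with ((b + Z.of_nat n0) + 1)%Z by lia. apply HS; auto. lia.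
Qed.

Lemma T_range (x : Qp p) n : 0 <= T n x < pw p n.
Proof.
  revert n. apply (Zind_from (lowb x)).
  - intros. rewrite T_low by auto. split. lra. apply pw_pos.
  - intros n _ [H1 H2]. rewrite T_step. pose proof (digit_range x n) as [D1 D2].
    apply IZR_le in D1. assert (IZR (digit x n) <= P - 1).
    { rewrite <- (minus_IZR _ 1). apply IZR_le. lia. }
    rewrite pw_add, pw_1. pose proof (pw_pos n). split; nra.
Qed.

Lemma T_inZ (x : Qp p) n k : (k <= lowb x)%Z -> inZ k (T n x).
Proof.
  intros Hk. revert n. apply (Zind_from (lowb x)).
  - intros. rewrite T_low by auto. apply inZ_0.
  - intros n Hn IH. rewrite T_step. apply inZ_add; auto.
    apply inZ_weak with n. lia. apply inZ_zpw.
Qed.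

Lemma T_cong (x : Qp p) m n : (m <= n)%Z -> cong m (T n x) (T m x).
Proof.
  intros Hmn. revert n Hmn. apply (Zind_from m (fun n => (m <= n)%Z -> cong m (T n x) (T m x))).
  - intros n H1 H2. assert (n = m) by lia. subst. apply cong_refl.
  - intros n Hn IH _. rewrite T_step. unfold cong.
    replace (T n x + IZR (digit x n) * pw p n - T m x) with ((T n x - T m x) + IZR (digit x n) * pw p n) by ring.
    apply inZ_add. apply IH; lia. apply inZ_weak with n. lia. apply inZ_zpw.
Qed.

Lemma T_mono (x : Qp p) m n : (m <= n)%Z -> T m x <= T n x.
Proof.
  intros Hmn. revert n Hmn. apply (Zind_from m (fun n => (m <= n)%Z -> T m x <= T n x)).
  - intros n H1 H2. assert (n = m) by lia. subst. lra.
  - intros n Hn IH _. rewrite T_step. pose proof (digit_range x n) as [D1 _]. apply IZR_le in D1.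
    pose proof (pw_pos n). specialize (IH ltac:(lia)). nra.
Qed.

Lemma T_zero_digits (x : Qp p) m : T m x = 0 <-> (forall j, (j < m)%Z -> digit x j = 0%Z).
Proof.
  split.
  - intros H j Hj. pose proof (T_mono x (j + 1) m ltac:(lia)). rewrite T_step in H0.
    pose proof (T_range x j) as [R1 _]. pose proof (digit_range x j) as [D1 _].
    pose proof (pw_pos j). destruct (Z.eq_dec (digit x j) 0); auto.
    assert (1 <= IZR (digit x j)) by (apply IZR_le; lia). nra.
  - intros H. revert m H. apply (Zind_from (lowb x) (fun m => (forall j, (j < m)%Z -> digit x j = 0%Z) -> T m x = 0)).
    + intros. apply T_low; auto.
    + intros n _ IH H. rewrite T_step. rewrite IH by (intros; apply H; lia). rewrite H by lia. simpl. ring.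
Qed.

Lemma T_digit (x : Qp p) n : IZR (digit x n) = (T (n + 1) x - T n x) / pw p n.
Proof. rewrite T_step. field. pose proof (pw_pos n). lra. Qed.

Lemma T_ext (x y : Qp p) : (forall n, T n x = T n y) -> x = y.
Proof.
  intros H. assert (Hd : forall j, digit x j = digit y j).
  { intros j. apply eq_IZR. rewrite !T_digit, !H. reflexivity. }
  destruct x as [dx Hx], y as [dy Hy]. unfold digit in Hd. simpl in Hd.
  assert (dx = dy) by (apply functional_extensionality; auto). subst.
  f_equal. apply proof_irrelevance.
Qed.

Lemma eq_by_cong (x y : Qp p) : (forall n, cong n (T n x) (T n y)) -> x = y.
Proof. intros H. apply T_ext. intros n. apply (cong_eq n); auto; apply T_range. Qed.


Definition regular (A : Z -> R) (K : Z) : Prop :=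
  (forall j, inZ K (A j)) /\ (forall j, cong (j + 1) (A (j + 1)%Z) (A j)).

Lemma Int_part_IZR z : Int_part (IZR z) = z.
Proof. symmetry. apply Int_part_spec. lra. Qed.

Lemma Int_part_frac r q : 0 <= r < 1 -> Int_part (r + IZR q) = q.
Proof. intros H. symmetry. apply Int_part_spec. lra. Qed.

Lemma divpw_int z K j : (j < K)%Z ->
  IZR z * pw p K / pw p j = IZR (z * Zpos p ^ (K - j - 1) * Zpos p).
Proof.
  intros H. rewrite !mult_IZR, <- pw_nat by lia. rewrite <- pw_1.
  replace (pw p K) with (pw p (K - j - 1) * pw p 1 * pw p j) by (rewrite <- !pw_add; f_equal; lia).
  field. pose proof (pw_pos j); lra.
Qed.

Lemma mk_digits A K : regular A K -> is_digits p (dig_of p A).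
Proof.
  intros [H1 H2]. split.
  - intros j. unfold dig_of. apply Z.mod_pos_bound. lia.
  - exists K. intros j Hj. unfold dig_of. destruct (H1 j) as [z Hz]. rewrite Hz.
    rewrite (divpw_int z K j) by lia. rewrite Int_part_IZR. apply Z_mod_mult.
Qed.

Lemma mk_digit A K : regular A K -> forall j, digit (mkQp p A) j = dig_of p A j.
Proof.
  intros HA j. unfold mkQp. destruct (excluded_middle_informative _) as [H|H].
  - reflexivity.
  - exfalso. apply H. eapply mk_digits; eauto.
Qed.

Lemma mk_T A K : regular A K -> forall n, cong n (T n (mkQp p A)) (A (n - 1)%Z).
Proof.
  intros HA. pose proof (mk_digit A K HA) as Hd. destruct HA as [H1 H2].
  apply (Zind_from K (fun n => cong n (T n (mkQp p A)) (A (n - 1)%Z))).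
  - intros n Hn. rewrite (proj2 (T_zero_digits _ n)).
    + unfold cong. replace (0 - A (n - 1)%Z) with (- A (n - 1)%Z) by ring. apply inZ_opp.
      apply inZ_weak with K; auto.
    + intros j Hj. rewrite Hd. unfold dig_of. destruct (H1 j) as [z Hz]. rewrite Hz.
      rewrite (divpw_int z K j) by lia. rewrite Int_part_IZR. apply Z_mod_mult.
  - intros n Hn IH. replace (n + 1 - 1)%Z with n by lia.
    assert (Hc : cong n (A n) (T n (mkQp p A))).
    { apply cong_trans with (A (n - 1)%Z). pose proof (H2 (n - 1)%Z) as E.
      replace (n - 1 + 1)%Z with n in E by lia. exact E. apply cong_sym; auto. }
    destruct Hc as [q Hq].
    rewrite T_step, Hd. unfold dig_of.
    replace (A n / pw p n) with (T n (mkQp p A) / pw p n + IZR q).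
    2:{ apply (Rmult_eq_reg_r (pw p n)). 2: pose proof (pw_pos n); lra.
        unfold Rdiv. rewrite Rmult_plus_distr_r, !Rmult_assoc, Rinv_l by (pose proof (pw_pos n); lra). lra. }
    rewrite Int_part_frac.
    2:{ pose proof (T_range (mkQp p A) n). pose proof (pw_pos n).
        split. apply Rmult_le_pos. lra. left; apply Rinv_0_lt_compat; lra.
        apply (Rmult_lt_reg_r (pw p n)). lra. unfold Rdiv. rewrite Rmult_assoc, Rinv_l; lra. }
    exists (- (q / Zpos p))%Z. rewrite (Z.mod_eq q (Zpos p)) by lia.
    rewrite opp_IZR, minus_IZR, mult_IZR, pw_add, pw_1. nra.
Qed.

Definition vb (x : Qp p) (K : Z) : Prop := forall a, inZ K (T a x).
Lemma vb_lowb x : vb x (lowb x).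
Proof. intros a. apply T_inZ. lia. Qed.

Lemma T_add_raw (x y : Qp p) n : cong n (T n (addQp x y)) (T n x + T n y).
Proof.
  assert (Hr : regular (fun j => T (j + 1) x + T (j + 1) y) (Z.min (lowb x) (lowb y))).
  { split. - intros j. apply inZ_add; apply T_inZ; lia.
    - intros j. apply cong_add; apply T_cong; lia. }
  pose proof (mk_T _ _ Hr n) as H. cbv beta in H. replace (n - 1 + 1)%Z with n in H by lia. exact H.
Qed.

Lemma T_sub_raw (x y : Qp p) n : cong n (T n (subQp x y)) (T n x - T n y).
Proof.
  assert (Hr : regular (fun j => T (j + 1) x - T (j + 1) y) (Z.min (lowb x) (lowb y))).
  { split. - intros j. apply inZ_sub; apply T_inZ; lia.
    - intros j. apply cong_sub; apply T_cong; lia. }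
  pose proof (mk_T _ _ Hr n) as H. cbv beta in H. replace (n - 1 + 1)%Z with n in H by lia. exact H.
Qed.

Lemma T_mul_raw (x y : Qp p) n :
  cong n (T n (mulQp x y)) (T (n - lowb y) x * T (n - lowb x) y).
Proof.
  assert (Hr : regular (fun j => T (j + 1 - lowb y) x * T (j + 1 - lowb x) y) (lowb x + lowb y)).
  2:{ pose proof (mk_T _ _ Hr n) as H. cbv beta in H.
  replace (n - 1 + 1 - lowb y)%Z with (n - lowb y)%Z in H by lia.
  replace (n - 1 + 1 - lowb x)%Z with (n - lowb x)%Z in H by lia. exact H. }
  split.
  - intros j. apply inZ_mul; apply T_inZ; lia.
  - intros j. unfold cong.
    set (a1 := T (j + 1 + 1 - lowb y) x). set (a0 := T (j + 1 - lowb y) x).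
    set (b1 := T (j + 1 + 1 - lowb x) y). set (b0 := T (j + 1 - lowb x) y).
    replace (a1 * b1 - a0 * b0) with ((a1 - a0) * b1 + a0 * (b1 - b0)) by ring.
    apply inZ_add.
    + apply inZ_weak with ((j + 1 - lowb y) + lowb y)%Z; [lia|].
      apply inZ_mul. apply T_cong; lia. apply T_inZ; lia.
    + apply inZ_weak with (lowb x + (j + 1 - lowb x))%Z; [lia|].
      apply inZ_mul. apply T_inZ; lia. apply T_cong; lia.
Qed.

Lemma T_ofZ (k e n : Z) : cong n (T n (ofZp p k e)) (IZR k * pw p e).
Proof.
  unfold ofZp. apply (mk_T (fun _ => IZR k * pw p e) e). split.
  - intros; apply inZ_zpw.
  - intros; apply cong_refl.
Qed.

Lemma T_frac (x : Qp p) n : cong n (T n (fracQp x)) (T 0 x).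
Proof.
  unfold fracQp. apply (mk_T (fun _ => fracR x) (lowb x)). split.
  - intros; apply T_inZ; lia.
  - intros; apply cong_refl.
Qed.


Lemma cong_mulR a k u u' v : cong a u u' -> inZ k v -> cong (a + k) (u * v) (u' * v).
Proof. intros. unfold cong. replace (u * v - u' * v) with ((u - u') * v) by ring. apply inZ_mul; auto. Qed.
Lemma cong_mulL a k u u' v : cong a u u' -> inZ k v -> cong (k + a) (v * u) (v * u').
Proof. intros. unfold cong. replace (v * u - v * u') with (v * (u - u')) by ring. apply inZ_mul; auto. Qed.

Lemma T_mul (x y : Qp p) Kx Ky n a b : vb x Kx -> vb y Ky ->
  (n - Ky <= a)%Z -> (n - Kx <= b)%Z -> cong n (T n (mulQp x y)) (T a x * T b y).
Proof.
  intros Hx Hy Ha Hb. pose proof (T_mul_raw x y n) as H0.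
  set (a0 := (n - lowb y)%Z) in *. set (b0 := (n - lowb x)%Z) in *.
  set (a1 := Z.max a0 a). set (b1 := Z.max b0 b).
  apply cong_trans with (T a0 x * T b0 y); auto.
  apply cong_trans with (T a1 x * T b0 y).
  { apply cong_weak with (a0 + lowb y)%Z. lia. apply cong_mulR. apply cong_sym, T_cong. lia. apply vb_lowb. }
  apply cong_trans with (T a1 x * T b1 y).
  { apply cong_weak with (lowb x + b0)%Z. lia. apply cong_mulL. apply cong_sym, T_cong. lia. apply vb_lowb. }
  apply cong_trans with (T a x * T b1 y).
  { apply cong_weak with (a + Ky)%Z. lia. apply cong_mulR. apply T_cong. lia. apply Hy. }
  { apply cong_weak with (Kx + b)%Z. lia. apply cong_mulL. apply T_cong. lia. apply Hx. }
Qed.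

Lemma T_zero n : T n (zeroQp p) = 0.
Proof. apply T_zero_digits. intros. reflexivity. Qed.

Lemma T_eq_of_cong (x : Qp p) n u : 0 <= u < pw p n -> cong n (T n x) u -> T n x = u.
Proof. intros. apply (cong_eq n); auto. apply T_range. Qed.

Lemma vb_ofZ k e : vb (ofZp p k e) e.
Proof.
  intros a. destruct (Z_le_gt_dec e a).
  - apply cong_inZ with (IZR k * pw p e). apply cong_weak with a. lia. apply T_ofZ. apply inZ_zpw.
  - rewrite (T_eq_of_cong _ a 0). apply inZ_0. split. lra. apply pw_pos.
    apply cong_trans with (IZR k * pw p e). apply T_ofZ. unfold cong. rewrite Rminus_0_r.
    apply inZ_weak with e. lia. apply inZ_zpw.
Qed.

Definition oneQp : Qp p := ofZp p 1 0.
Definition oppQp (x : Qp p) : Qp p := subQp (zeroQp p) x.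

Lemma T_one n : (1 <= n)%Z -> T n oneQp = 1.
Proof.
  intros Hn. apply T_eq_of_cong. split. lra. rewrite <- pw_0. apply pw_lt. lia.
  pose proof (T_ofZ 1 0 n). rewrite pw_0, Rmult_1_r in H. exact H.
Qed.

Definition big (l : list Z) : Z := fold_right (fun a b => (Z.abs a + b)%Z) 0%Z l.
Lemma big_ge l a : In a l -> (a <= big l /\ - a <= big l /\ 0 <= big l)%Z.
Proof.
  induction l; simpl; intros H. contradiction.
  assert (0 <= big l)%Z.
  { clear. induction l; simpl; lia. }
  destruct H as [->|H]. lia. specialize (IHl H). lia.
Qed.

Lemma addC (x y : Qp p) : addQp x y = addQp y x.
Proof.
  apply eq_by_cong. intros n. eapply cong_trans. apply T_add_raw.
  eapply cong_trans. 2: apply cong_sym, T_add_raw. apply cong_eqR. ring.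
Qed.
Lemma addA (x y z : Qp p) : addQp x (addQp y z) = addQp (addQp x y) z.
Proof.
  apply eq_by_cong. intros n. eapply cong_trans. apply T_add_raw.
  eapply cong_trans. 2: apply cong_sym, T_add_raw.
  eapply cong_trans. apply cong_add. apply cong_refl. apply T_add_raw.
  eapply cong_trans. 2: apply cong_add. 3: apply cong_refl. 2: apply cong_sym, T_add_raw.
  apply cong_eqR. ring.
Qed.
Lemma add0l (x : Qp p) : addQp (zeroQp p) x = x.
Proof.
  apply eq_by_cong. intros n. eapply cong_trans. apply T_add_raw. rewrite T_zero. apply cong_eqR. ring.
Qed.
Lemma mulC (x y : Qp p) : mulQp x y = mulQp y x.
Proof.
  apply eq_by_cong. intros n. eapply cong_trans. apply T_mul_raw.
  eapply cong_trans. 2: apply cong_sym, T_mul_raw. apply cong_eqR. ring.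
Qed.
Lemma mul1l (x : Qp p) : mulQp oneQp x = x.
Proof.
  apply eq_by_cong. intros n.
  eapply cong_trans. apply (T_mul oneQp x 0 (lowb x) n (Z.max 1 (n - lowb x)) n).
  apply vb_ofZ. apply vb_lowb. lia. lia.
  rewrite T_one by lia. apply cong_eqR. ring.
Qed.

Lemma mulA (x y z : Qp p) : mulQp x (mulQp y z) = mulQp (mulQp x y) z.
Proof.
  apply eq_by_cong. intros n.
  set (B := (big (n :: lowb x :: lowb y :: lowb z :: lowb (mulQp x y) :: lowb (mulQp y z) :: nil))%Z).
  pose proof (big_ge (n :: lowb x :: lowb y :: lowb z :: lowb (mulQp x y) :: lowb (mulQp y z) :: nil)) as HB.
  fold B in HB. set (C := (4 * B)%Z).
  pose proof (HB n ltac:(simpl; tauto)). pose proof (HB (lowb x) ltac:(simpl; tauto)).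
  pose proof (HB (lowb y) ltac:(simpl; tauto)). pose proof (HB (lowb z) ltac:(simpl; tauto)).
  pose proof (HB (lowb (mulQp x y)) ltac:(simpl; tauto)). pose proof (HB (lowb (mulQp y z)) ltac:(simpl; tauto)).
  clear HB.
  apply cong_trans with (T C x * (T C y * T C z)).
  - eapply cong_trans. apply (T_mul x (mulQp y z) (lowb x) (lowb (mulQp y z)) n C (n - lowb x)).
    apply vb_lowb. apply vb_lowb. lia. lia.
    apply cong_weak with (lowb x + (n - lowb x))%Z. lia. apply cong_mulL. 2: apply vb_lowb.
    apply (T_mul y z (lowb y) (lowb z)). apply vb_lowb. apply vb_lowb. lia. lia.
  - apply cong_sym. eapply cong_trans. apply (T_mul (mulQp x y) z (lowb (mulQp x y)) (lowb z) n (n - lowb z) C).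
    apply vb_lowb. apply vb_lowb. lia. lia.
    rewrite <- Rmult_assoc.
    apply cong_weak with ((n - lowb z) + lowb z)%Z. lia. apply cong_mulR. 2: apply vb_lowb.
    apply (T_mul x y (lowb x) (lowb y)). apply vb_lowb. apply vb_lowb. lia. lia.
Qed.

Lemma distr (x y z : Qp p) : mulQp (addQp x y) z = addQp (mulQp x z) (mulQp y z).
Proof.
  apply eq_by_cong. intros n.
  set (B := (big (n :: lowb x :: lowb y :: lowb z :: lowb (addQp x y) :: nil))%Z).
  pose proof (big_ge (n :: lowb x :: lowb y :: lowb z :: lowb (addQp x y) :: nil)) as HB.
  fold B in HB. set (C := (4 * B)%Z).
  pose proof (HB n ltac:(simpl; tauto)). pose proof (HB (lowb x) ltac:(simpl; tauto)).
  pose proof (HB (lowb y) ltac:(simpl; tauto)). pose proof (HB (lowb z) ltac:(simpl; tauto)).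
  pose proof (HB (lowb (addQp x y)) ltac:(simpl; tauto)). clear HB.
  apply cong_trans with ((T (n - lowb z) x + T (n - lowb z) y) * T C z).
  - eapply cong_trans. apply (T_mul (addQp x y) z (lowb (addQp x y)) (lowb z) n (n - lowb z) C).
    apply vb_lowb. apply vb_lowb. lia. lia.
    apply cong_weak with ((n - lowb z) + lowb z)%Z. lia. apply cong_mulR. 2: apply vb_lowb.
    apply T_add_raw.
  - apply cong_sym. eapply cong_trans. apply T_add_raw. rewrite Rmult_plus_distr_r.
    apply cong_add.
    + apply (T_mul x z (lowb x) (lowb z)). apply vb_lowb. apply vb_lowb. lia. lia.
    + apply (T_mul y z (lowb y) (lowb z)). apply vb_lowb. apply vb_lowb. lia. lia.
Qed.

Lemma sub_def (x y : Qp p) : subQp x y = addQp x (oppQp y).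
Proof.
  apply eq_by_cong. intros n. eapply cong_trans. apply T_sub_raw.
  eapply cong_trans. 2: apply cong_sym, T_add_raw.
  eapply cong_trans. 2: apply cong_add. 2: apply cong_refl. 2: apply cong_sym, T_sub_raw.
  rewrite T_zero. apply cong_eqR. ring.
Qed.
Lemma opp_def (x : Qp p) : addQp x (oppQp x) = zeroQp p.
Proof.
  apply eq_by_cong. intros n. eapply cong_trans. apply T_add_raw.
  eapply cong_trans. apply cong_add. apply cong_refl. apply T_sub_raw.
  rewrite !T_zero. apply cong_eqR. ring.
Qed.

Lemma QpRth : ring_theory (zeroQp p) oneQp addQp mulQp subQp oppQp (@eq (Qp p)).
Proof.
  constructor.
  - exact add0l.
  - exact addC.
  - exact addA.
  - exact mul1l.
  - exact mulC.
  - exact mulA.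
  - exact distr.
  - exact sub_def.
  - exact opp_def.
Qed.

Add Ring QpRing : QpRth.



Lemma least_nonzero (z : Qp p) j : digit z j <> 0%Z ->
  exists v, digit z v <> 0%Z /\ forall i, (i < v)%Z -> digit z i = 0%Z.
Proof.
  intros Hj. assert (Hk : (j < lowb z + Z.of_nat (Z.to_nat (j - lowb z + 1)))%Z) by lia.
  remember (Z.to_nat (j - lowb z + 1)) as n eqn:En. clear En. revert j Hj Hk. induction n; intros j Hj Hk.
  - exfalso. apply Hj. apply lowb_spec. lia.
  - destruct (classic (exists i, (i < j)%Z /\ digit z i <> 0%Z)) as [[i [Hi1 Hi2]]|Hn].
    + apply (IHn i); auto. lia.
    + exists j. split; auto. intros i Hi. apply NNPP. intros Hc. apply Hn. exists i. auto.
Qed.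

Lemma norm_le_iff (z : Qp p) g : normQp z <= pw p g <-> T (- g) z = 0.
Proof.
  unfold normQp. destruct (excluded_middle_informative _) as [H|H].
  - destruct (constructive_indefinite_description _ H) as [v [Hv1 Hv2]]. simpl. split.
    + intros Hle. apply pw_le_inv in Hle. apply T_zero_digits. intros j Hj. apply Hv2. lia.
    + intros HT. rewrite T_zero_digits in HT. apply pw_le.
      destruct (Z_le_gt_dec (- v) g); auto. exfalso. apply Hv1. apply HT. lia.
  - split; intros _.
    + apply T_zero_digits. intros j _. destruct (Z.eq_dec (digit z j) 0); auto.
      exfalso. apply H. apply (least_nonzero z j); auto.
    + left; apply pw_pos.
Qed.

Lemma ball_iff g (a x : Qp p) : ball_p g a x <-> T (- g) x = T (- g) a.
Proof.
  unfold ball_p. rewrite norm_le_iff. split.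
  - intros H. pose proof (T_sub_raw x a (- g)) as C. rewrite H in C.
    apply (cong_eq (- g)); try apply T_range.
    unfold cong in *. replace (T (- g) x - T (- g) a) with (- (0 - (T (- g) x - T (- g) a))) by ring.
    apply inZ_opp; auto.
  - intros H. apply T_eq_of_cong. split. lra. apply pw_pos.
    eapply cong_trans. apply T_sub_raw. rewrite H. apply cong_eqR. ring.
Qed.

Lemma ball0_iff g (x : Qp p) : ball_p g (zeroQp p) x <-> T (- g) x = 0.
Proof. rewrite ball_iff, T_zero. tauto. Qed.

Lemma T_eq_mono (x y : Qp p) m n : (m <= n)%Z -> T n x = T n y -> T m x = T m y.
Proof.
  intros Hmn H. apply (cong_eq m); try apply T_range.
  eapply cong_trans. apply cong_sym, T_cong; eauto. rewrite H. apply T_cong; auto.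
Qed.

Lemma ball_mono g g' (a x : Qp p) : (g <= g')%Z -> ball_p g a x -> ball_p g' a x.
Proof. rewrite !ball_iff. intros. apply T_eq_mono with (- g)%Z; auto. lia. Qed.

Lemma ball_sym g (a x : Qp p) : ball_p g a x -> ball_p g x a.
Proof. rewrite !ball_iff. auto. Qed.
Lemma ball_trans g (a b x : Qp p) : ball_p g a b -> ball_p g b x -> ball_p g a x.
Proof. rewrite !ball_iff. congruence. Qed.

Lemma ball_vb g (x : Qp p) : ball_p g (zeroQp p) x -> vb x (- g).
Proof.
  rewrite ball0_iff. intros H a. destruct (Z_le_gt_dec (- g) a).
  - apply cong_inZ with (T (- g) x). apply cong_weak with (- g)%Z. lia. apply T_cong. lia.
    rewrite H. apply inZ_0.
  - assert (T a x = 0). { pose proof (T_mono x a (- g) ltac:(lia)). pose proof (T_range x a). lra. }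
    rewrite H0. apply inZ_0.
Qed.

Lemma ball_lowb (x : Qp p) : ball_p (- lowb x) (zeroQp p) x.
Proof. rewrite ball0_iff. apply T_low. lia. Qed.

Lemma ball_mul A B (u w : Qp p) : ball_p A (zeroQp p) u -> ball_p B (zeroQp p) w ->
  ball_p (A + B) (zeroQp p) (mulQp u w).
Proof.
  intros Hu Hw. pose proof (ball_vb _ _ Hu) as Vu. pose proof (ball_vb _ _ Hw) as Vw.
  rewrite ball0_iff in *. apply T_eq_of_cong. split. lra. apply pw_pos.
  eapply cong_trans. apply (T_mul u w (- A) (- B) (- (A + B)) (- A) (- B)); auto; lia.
  rewrite Hu. apply cong_eqR. ring.
Qed.

Lemma ball_add g (u w : Qp p) : ball_p g (zeroQp p) u -> ball_p g (zeroQp p) w ->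
  ball_p g (zeroQp p) (addQp u w).
Proof.
  rewrite !ball0_iff. intros Hu Hw. apply T_eq_of_cong. split. lra. apply pw_pos.
  eapply cong_trans. apply T_add_raw. rewrite Hu, Hw. apply cong_eqR. ring.
Qed.
Lemma ball_opp g (u : Qp p) : ball_p g (zeroQp p) u -> ball_p g (zeroQp p) (oppQp u).
Proof.
  rewrite !ball0_iff. intros Hu. apply T_eq_of_cong. split. lra. apply pw_pos.
  eapply cong_trans. apply T_sub_raw. rewrite Hu, T_zero. apply cong_eqR. ring.
Qed.

Lemma ball_shift g (a x : Qp p) : ball_p g a x <-> ball_p g (zeroQp p) (subQp x a).
Proof.
  unfold ball_p. replace (subQp (subQp x a) (zeroQp p)) with (subQp x a) by ring. tauto.
Qed.

Lemma T_scal (k e : Z) (x : Qp p) n :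
  cong n (T n (mulQp (ofZp p k e) x)) (IZR k * pw p e * T (n - e) x).
Proof.
  set (a := Z.max (n - lowb x) e).
  eapply cong_trans. apply (T_mul (ofZp p k e) x e (lowb x) n a (n - e)).
  apply vb_ofZ. apply vb_lowb. lia. lia.
  apply cong_weak with (a + lowb x)%Z. lia. apply cong_mulR. 2: apply vb_lowb.
  apply T_ofZ.
Qed.

Lemma ofZ_eq k e k' e' : IZR k * pw p e = IZR k' * pw p e' -> ofZp p k e = ofZp p k' e'.
Proof.
  intros H. apply eq_by_cong. intros n. eapply cong_trans. apply T_ofZ. rewrite H.
  apply cong_sym, T_ofZ.
Qed.

Lemma ofZ_add k k' e : addQp (ofZp p k e) (ofZp p k' e) = ofZp p (k + k') e.
Proof.
  apply eq_by_cong. intros n. eapply cong_trans. apply T_add_raw.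
  eapply cong_trans. apply cong_add; apply T_ofZ.
  eapply cong_trans. 2: apply cong_sym, T_ofZ. apply cong_eqR. rewrite plus_IZR. ring.
Qed.

Lemma ofZ_mul k k' e e' : mulQp (ofZp p k e) (ofZp p k' e') = ofZp p (k * k') (e + e').
Proof.
  apply eq_by_cong. intros n. eapply cong_trans. apply T_scal.
  eapply cong_trans. apply (cong_weak n (e + (n - e))). lia. apply cong_mulL. apply T_ofZ. apply inZ_zpw.
  eapply cong_trans. 2: apply cong_sym, T_ofZ. apply cong_eqR. rewrite mult_IZR, pw_add. ring.
Qed.

Lemma cosZ u z : cos (u + 2 * IZR z * PI) = cos u.
Proof.
  destruct (Z_le_gt_dec 0 z).
  - rewrite <- (Z2Nat.id z) by lia. rewrite <- INR_IZR_INZ. apply cos_period.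
  - replace u with ((u + 2 * IZR z * PI) + 2 * INR (Z.to_nat (- z)) * PI) at 2.
    + rewrite cos_period. reflexivity.
    + rewrite INR_IZR_INZ, Z2Nat.id by lia. rewrite opp_IZR. ring.
Qed.
Lemma sinZ u z : sin (u + 2 * IZR z * PI) = sin u.
Proof.
  destruct (Z_le_gt_dec 0 z).
  - rewrite <- (Z2Nat.id z) by lia. rewrite <- INR_IZR_INZ. apply sin_period.
  - replace u with ((u + 2 * IZR z * PI) + 2 * INR (Z.to_nat (- z)) * PI) at 2.
    + rewrite sin_period. reflexivity.
    + rewrite INR_IZR_INZ, Z2Nat.id by lia. rewrite opp_IZR. ring.
Qed.

Lemma chi_T (x : Qp p) : chi x = (cos (2 * PI * T 0 x), sin (2 * PI * T 0 x)).
Proof. reflexivity. Qed.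

Lemma chi_add (x y : Qp p) : chi (addQp x y) = (chi x * chi y)%C.
Proof.
  rewrite !chi_T. destruct (T_add_raw x y 0) as [z Hz]. rewrite pw_0, Rmult_1_r in Hz.
  replace (2 * PI * T 0 (addQp x y)) with ((2 * PI * T 0 x + 2 * PI * T 0 y) + 2 * IZR z * PI)
    by (replace (T 0 (addQp x y)) with (T 0 x + T 0 y + IZR z) by lra; ring).
  rewrite cosZ, sinZ, cos_plus, sin_plus. unfold Cmult. simpl. f_equal; ring.
Qed.

Lemma chi_ball0 (x : Qp p) : ball_p 0 (zeroQp p) x -> chi x = 1%C.
Proof.
  rewrite ball0_iff. simpl. intros H. rewrite chi_T, H, Rmult_0_r, cos_0, sin_0. reflexivity.
Qed.


Fixpoint SR (n : nat) (F : nat -> C) : C :=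
  match n with O => 0%C | S n => (SR n F + F n)%C end.

Lemma sumC_app l1 l2 : sumC (l1 ++ l2) = (sumC l1 + sumC l2)%C.
Proof. induction l1; simpl. ring. rewrite IHl1. ring. Qed.

Lemma sumC_SR n F : sumC (map F (seq 0 n)) = SR n F.
Proof.
  induction n. reflexivity. rewrite seq_S, map_app, sumC_app, IHn. simpl. ring.
Qed.

Lemma SR_ext n (F G : nat -> C) : (forall i, (i < n)%nat -> F i = G i) -> SR n F = SR n G.
Proof. induction n; simpl; intros H. auto. rewrite IHn, H; auto. Qed.

Lemma SR_plus n F G : SR n (fun i => F i + G i)%C = (SR n F + SR n G)%C.
Proof. induction n; simpl. ring. rewrite IHn. ring. Qed.
Lemma SR_scal n c F : SR n (fun i => c * F i)%C = (c * SR n F)%C.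
Proof. induction n; simpl. ring. rewrite IHn. ring. Qed.
Lemma SR_zero n : SR n (fun _ => 0%C) = 0%C.
Proof. induction n; simpl. auto. rewrite IHn. ring. Qed.
Lemma SR_const n c : SR n (fun _ => c) = (RtoC (INR n) * c)%C.
Proof. induction n. simpl. rewrite Cmult_0_l. reflexivity.
  cbn [SR]. rewrite IHn, S_INR, RtoC_plus. ring. Qed.

Lemma SR_add a b F : SR (a + b) F = (SR a F + SR b (fun i => F (a + i)%nat))%C.
Proof.
  induction b; simpl. rewrite Nat.add_0_r. ring.
  rewrite Nat.add_succ_r. simpl. rewrite IHb. ring.
Qed.

Lemma SR_mul a b F : SR (a * b) F = SR a (fun q => SR b (fun r => F (q * b + r)%nat)).
Proof.
  induction a; simpl. auto.
  replace (b + a * b)%nat with (a * b + b)%nat by lia. rewrite SR_add, IHa. reflexivity.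
Qed.

Lemma SR_first n (F : nat -> C) : (forall i, (0 < i < S n)%nat -> F i = 0%C) -> SR (S n) F = F 0%nat.
Proof.
  intros H. replace (S n) with (1 + n)%nat by lia. rewrite SR_add. simpl.
  rewrite (SR_ext n _ (fun _ => 0%C)). rewrite SR_zero. ring.
  intros i Hi. apply H. lia.
Qed.

Lemma SR_perm (K : nat) (c : Z) (H : Z -> C) : (0 < K)%nat ->
  SR K (fun n => H ((Z.of_nat n + c) mod Z.of_nat K)%Z) = SR K (fun n => H (Z.of_nat n)).
Proof.
  intros HK. set (c' := Z.to_nat (c mod Z.of_nat K)).
  assert (Hc' : (c' < K)%nat).
  { unfold c'. pose proof (Z.mod_pos_bound c (Z.of_nat K) ltac:(lia)). lia. }
  rewrite (SR_ext K _ (fun n => H ((Z.of_nat n + Z.of_nat c') mod Z.of_nat K)%Z)).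
  2:{ intros i _. f_equal. unfold c'. rewrite Z2Nat.id by (apply Z.mod_pos_bound; lia).
      rewrite Zplus_mod_idemp_r. reflexivity. }
  assert (E1 : forall G : nat -> C, SR K G = (SR (K - c') G + SR c' (fun i => G (K - c' + i)%nat))%C).
  { intros G. rewrite <- SR_add. f_equal. lia. }
  assert (E2 : forall G : nat -> C, SR K G = (SR c' G + SR (K - c') (fun i => G (c' + i)%nat))%C).
  { intros G. rewrite <- SR_add. f_equal. lia. }
  rewrite E1, (E2 (fun n => H (Z.of_nat n))). rewrite Cplus_comm. f_equal.
  - apply SR_ext. intros i Hi. f_equal. rewrite Nat2Z.inj_add.
    replace (Z.of_nat (K - c') + Z.of_nat i + Z.of_nat c')%Z with (Z.of_nat i + 1 * Z.of_nat K)%Z by lia.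
    rewrite Z_mod_plus_full. apply Z.mod_small. lia.
  - apply SR_ext. intros i Hi. f_equal. rewrite Z.mod_small by lia. lia.
Qed.

Lemma Re_SR_S n (F : nat -> C) : Re (SR (S n) F) = Re (SR n F) + Re (F n).
Proof. reflexivity. Qed.

Lemma SR_re_nonneg n (F : nat -> C) : (forall j, (j < n)%nat -> 0 <= Re (F j)) -> 0 <= Re (SR n F).
Proof.
  induction n; intros H. simpl. lra. rewrite Re_SR_S.
  pose proof (H n ltac:(lia)). assert (0 <= Re (SR n F)) by (apply IHn; intros; apply H; lia). lra.
Qed.

Lemma SR_re_ge n (F : nat -> C) i : (forall j, (j < n)%nat -> 0 <= Re (F j)) -> (i < n)%nat ->
  Re (F i) <= Re (SR n F).
Proof.
  induction n; intros H Hi. lia. rewrite Re_SR_S.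
  assert (0 <= Re (SR n F)) by (apply SR_re_nonneg; intros; apply H; lia).
  destruct (Nat.eq_dec i n). subst. lra.
  pose proof (H n ltac:(lia)). pose proof (IHn ltac:(intros; apply H; lia) ltac:(lia)). lra.
Qed.


Lemma pw_int_eq a b e e' : (e <= e')%Z -> IZR a * pw p e = IZR b * pw p e' -> a = (b * Zpos p ^ (e' - e))%Z.
Proof.
  intros He H. apply eq_IZR. rewrite mult_IZR, <- pw_nat by lia.
  replace (pw p e') with (pw p e * pw p (e' - e)) in H by (rewrite <- pw_add; f_equal; lia).
  apply (Rmult_eq_reg_r (pw p e)). rewrite H. ring. pose proof (pw_pos e). lra.
Qed.

Lemma IZR_ppow e : (0 <= e)%Z -> IZR (Z.of_nat (Z.to_nat (Zpos p ^ e))) = pw p e.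
Proof.
  intros He. rewrite Z2Nat.id. rewrite pw_nat; auto. apply Z.pow_nonneg. lia.
Qed.

Lemma ball_ofZ l e m m' : cong (- l) (IZR m * pw p e) (IZR m' * pw p e) -> ball_p l (ofZp p m' e) (ofZp p m e).
Proof.
  intros H. apply ball_iff. apply (cong_eq (- l)); try apply T_range.
  eapply cong_trans. apply T_ofZ. eapply cong_trans. apply H. apply cong_sym, T_ofZ.
Qed.

Lemma RS_SR (f : Qp p -> C) R l : riemann_sum f (R, l) =
  (RtoC (pw p l) * SR (Z.to_nat (Zpos p ^ (R - l))) (fun n => f (ofZp p (Z.of_nat n) (- R))))%C.
Proof. unfold riemann_sum. simpl. rewrite sumC_SR. reflexivity. Qed.

Lemma gp_mono (f : Qp p -> C) R l R' l' : good_pair f (R, l) -> (R <= R')%Z -> (l' <= l)%Z ->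
  good_pair f (R', l').
Proof.
  intros [H1 [H2 H3]] HR Hl. simpl in *. split; [|split]; simpl.
  - lia.
  - intros x Hx. apply ball_mono with R; auto.
  - intros x y Hxy. apply H3. apply ball_mono with l'; auto.
Qed.

Lemma Pnat_S : exists k, Pos.to_nat p = S k.
Proof. exists (Pos.to_nat p - 1)%nat. lia. Qed.

Lemma RS_R (f : Qp p -> C) R l : good_pair f (R, l) -> riemann_sum f ((R + 1)%Z, l) = riemann_sum f (R, l).
Proof.
  intros G. pose proof G as [H1 [H2 H3]]. simpl in *. rewrite !RS_SR.
  set (K := Z.to_nat (Zpos p ^ (R - l))).
  replace (Z.to_nat (Zpos p ^ (R + 1 - l))) with (K * Pos.to_nat p)%nat.
  2:{ unfold K. replace (R + 1 - l)%Z with (Z.succ (R - l)) by lia. rewrite Z.pow_succ_r by lia.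
      rewrite Z.mul_comm. rewrite Z2Nat.inj_mul. reflexivity. apply Z.pow_nonneg; lia. lia. }
  rewrite SR_mul. f_equal. apply SR_ext. intros q Hq.
  destruct Pnat_S as [k Hk]. change (Z.to_nat (Zpos p)) with (Pos.to_nat p) in *. rewrite Hk. rewrite SR_first.
  - f_equal. apply ofZ_eq. rewrite Nat.add_0_r, Nat2Z.inj_mul, mult_IZR.
    rewrite <- Hk, positive_nat_Z.
    replace (- R)%Z with (- (R + 1) + 1)%Z by lia. rewrite (pw_add (- (R + 1))), pw_1. ring.
  - intros r Hr. destruct (classic (f (ofZp p (Z.of_nat (q * S k + r)) (- (R + 1))) = 0%C)) as [E|E]; auto.
    exfalso. apply H2 in E. rewrite ball0_iff in E. pose proof (T_ofZ (Z.of_nat (q * S k + r)) (- (R + 1)) (- R)) as C.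
    rewrite E in C. destruct C as [z Hz].
    assert (Hz' : IZR (Z.of_nat (q * S k + r)) * pw p (- (R + 1)) = IZR (- z) * pw p (- R)).
    { rewrite opp_IZR. lra. }
    apply pw_int_eq in Hz'; [|lia]. replace (- R - - (R + 1))%Z with 1%Z in Hz' by lia.
    rewrite Z.pow_1_r in Hz'. rewrite <- Hk in Hz'.
    rewrite Nat2Z.inj_add, Nat2Z.inj_mul, positive_nat_Z in Hz'.
    assert (0 < Z.of_nat r < Zpos p)%Z. { split. lia. rewrite <- positive_nat_Z. lia. }
    assert (Er : Z.of_nat r = ((- z - Z.of_nat q) * Zpos p)%Z) by (rewrite Z.mul_sub_distr_r; lia).
    destruct (Z_le_gt_dec (- z - Z.of_nat q) 0); nia.
Qed.

Lemma RS_l (f : Qp p -> C) R l : good_pair f (R, l) -> riemann_sum f (R, (l - 1)%Z) = riemann_sum f (R, l).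
Proof.
  intros G. pose proof G as [H1 [H2 H3]]. simpl in *. rewrite !RS_SR.
  set (K := Z.to_nat (Zpos p ^ (R - l))).
  replace (Z.to_nat (Zpos p ^ (R - (l - 1)))) with (Pos.to_nat p * K)%nat.
  2:{ unfold K. replace (R - (l - 1))%Z with (Z.succ (R - l)) by lia. rewrite Z.pow_succ_r by lia.
      rewrite Z2Nat.inj_mul. reflexivity. lia. apply Z.pow_nonneg; lia. }
  rewrite SR_mul.
  rewrite (SR_ext _ _ (fun _ => SR K (fun n => f (ofZp p (Z.of_nat n) (- R))))).
  - rewrite SR_const. rewrite INR_IZR_INZ, positive_nat_Z. rewrite Cmult_assoc, <- RtoC_mult.
    f_equal. f_equal. replace l with ((l - 1) + 1)%Z at 2 by lia. rewrite pw_add, pw_1. ring.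
  - intros q Hq. apply SR_ext. intros r Hr. apply H3. apply ball_ofZ.
    exists (Z.of_nat q). rewrite Nat2Z.inj_add, Nat2Z.inj_mul, plus_IZR, mult_IZR.
    unfold K. rewrite IZR_ppow by lia.
    replace (- R)%Z with (- l + - (R - l))%Z by lia. rewrite !pw_add, !pw_opp.
    field. pose proof (pw_pos (R - l)). pose proof (pw_pos l). lra.
Qed.

Lemma RS_mono (f : Qp p -> C) R l R' l' : good_pair f (R, l) -> (R <= R')%Z -> (l' <= l)%Z ->
  riemann_sum f (R', l') = riemann_sum f (R, l).
Proof.
  intros G HR Hl.
  assert (E1 : forall k : nat, riemann_sum f ((R + Z.of_nat k)%Z, l) = riemann_sum f (R, l)).
  { induction k. simpl. rewrite Z.add_0_r. auto.
    replace (R + Z.of_nat (S k))%Z with ((R + Z.of_nat k) + 1)%Z by lia. rewrite RS_R. auto.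
    apply gp_mono with R l; auto; lia. }
  assert (E2 : forall k : nat, riemann_sum f (R', (l - Z.of_nat k)%Z) = riemann_sum f (R', l)).
  { induction k. simpl. rewrite Z.sub_0_r. auto.
    replace (l - Z.of_nat (S k))%Z with (l - Z.of_nat k - 1)%Z by lia.
    rewrite RS_l. auto. apply gp_mono with R l; auto; lia. }
  specialize (E1 (Z.to_nat (R' - R))). specialize (E2 (Z.to_nat (l - l'))).
  rewrite Z2Nat.id in E1, E2 by lia. replace (R + (R' - R))%Z with R' in E1 by lia.
  replace (l - (l - l'))%Z with l' in E2 by lia. congruence.
Qed.

Lemma integral_eq (f : Qp p -> C) R l : good_pair f (R, l) -> integral f = riemann_sum f (R, l).
Proof.
  intros G. unfold integral. destruct (excluded_middle_informative _) as [H|H].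
  - destruct (constructive_indefinite_description _ H) as [[R1 l1] G1]. simpl.
    rewrite <- (RS_mono f R1 l1 (Z.max R R1) (Z.min l l1)); auto; try lia.
    apply RS_mono; auto; lia.
  - exfalso. apply H. exists (R, l). auto.
Qed.


Definition tf (f : Qp p -> C) : Prop := exists R l, good_pair f (R, l).

Lemma gp_plus (f g : Qp p -> C) R l : good_pair f (R, l) -> good_pair g (R, l) ->
  good_pair (fun x => f x + g x)%C (R, l).
Proof.
  intros [F1 [F2 F3]] [G1 [G2 G3]]. simpl in *. split; [|split]; simpl; auto.
  - intros x Hx. destruct (classic (f x = 0%C)) as [E|E]. 2: auto.
    apply G2. intros E'. apply Hx. rewrite E, E'. ring.
  - intros x y H. rewrite (F3 x y H), (G3 x y H). reflexivity.
Qed.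

Lemma gp_mulfun (f g : Qp p -> C) R l l' : good_pair f (R, l) -> (forall x y, ball_p l' y x -> g x = g y) ->
  good_pair (fun x => g x * f x)%C (R, Z.min l l').
Proof.
  intros [F1 [F2 F3]] Hg. simpl in *. split; [|split]; simpl.
  - lia.
  - intros x Hx. apply F2. intros E. apply Hx. rewrite E. ring.
  - intros x y H. rewrite (F3 x y), (Hg x y). reflexivity.
    apply ball_mono with (Z.min l l'); auto; lia. apply ball_mono with (Z.min l l'); auto; lia.
Qed.

Lemma gp_scal (f : Qp p -> C) c R l : good_pair f (R, l) -> good_pair (fun x => c * f x)%C (R, l).
Proof.
  intros G. pose proof (gp_mulfun f (fun _ => c) R l l G) as H. rewrite Z.min_id in H. apply H. auto.
Qed.

Lemma tf_plus f g : tf f -> tf g -> tf (fun x => f x + g x)%C.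
Proof.
  intros [R1 [l1 G1]] [R2 [l2 G2]]. exists (Z.max R1 R2), (Z.min l1 l2). apply gp_plus.
  apply gp_mono with R1 l1; auto; lia. apply gp_mono with R2 l2; auto; lia.
Qed.

Lemma integral_plus f g : tf f -> tf g -> integral (fun x => f x + g x)%C = (integral f + integral g)%C.
Proof.
  intros [R1 [l1 G1]] [R2 [l2 G2]].
  assert (G1' : good_pair f (Z.max R1 R2, Z.min l1 l2)) by (apply gp_mono with R1 l1; auto; lia).
  assert (G2' : good_pair g (Z.max R1 R2, Z.min l1 l2)) by (apply gp_mono with R2 l2; auto; lia).
  rewrite (integral_eq _ _ _ (gp_plus _ _ _ _ G1' G2')), (integral_eq _ _ _ G1'), (integral_eq _ _ _ G2').
  rewrite !RS_SR, SR_plus. ring.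
Qed.

Lemma integral_scal f c : tf f -> integral (fun x => c * f x)%C = (c * integral f)%C.
Proof.
  intros [R [l G]]. rewrite (integral_eq _ _ _ (gp_scal _ c _ _ G)), (integral_eq _ _ _ G).
  rewrite !RS_SR, SR_scal. ring.
Qed.

Lemma gp_zero : good_pair (fun _ : Qp p => 0%C) (0%Z, 0%Z).
Proof. split; [|split]; simpl. lia. intros x H. exfalso; auto. auto. Qed.

Lemma integral_zero : integral (fun _ : Qp p => 0%C) = 0%C.
Proof. rewrite (integral_eq _ _ _ gp_zero), RS_SR, SR_zero. ring. Qed.

Lemma tf_sum {A : Type} (G : A -> Qp p -> C) (L : list A) :
  (forall k, In k L -> tf (G k)) -> tf (fun x => sumC (map (fun k => G k x) L)).
Proof.
  induction L; intros H; simpl.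
  - exists 0%Z, 0%Z. apply gp_zero.
  - apply tf_plus. apply H; simpl; auto. apply IHL. intros; apply H; simpl; auto.
Qed.

Lemma integral_sum {A : Type} (G : A -> Qp p -> C) (L : list A) :
  (forall k, In k L -> tf (G k)) ->
  integral (fun x => sumC (map (fun k => G k x) L)) = sumC (map (fun k => integral (G k)) L).
Proof.
  induction L; intros H; simpl.
  - apply integral_zero.
  - rewrite integral_plus. rewrite IHL. auto. intros; apply H; simpl; auto.
    apply H; simpl; auto. apply tf_sum. intros; apply H; simpl; auto.
Qed.

Definition dil (x : Qp p) : Qp p := mulQp (ofZp p 1 (-1)) x.

Lemma T_dilsub (x a : Qp p) n : cong n (T n (subQp (dil x) a)) (pw p (-1) * T (n + 1) x - T n a).
Proof.
  eapply cong_trans. apply T_sub_raw. apply cong_sub. 2: apply cong_refl.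
  eapply cong_trans. apply T_scal. replace (n - -1)%Z with (n + 1)%Z by lia. apply cong_eqR. ring.
Qed.

Lemma T_dilsub' (x a : Qp p) n : cong (n + 1) (T (n + 1) x) (P * (T n (subQp (dil x) a) + T n a)).
Proof.
  assert (HP : inZ 1 P) by (rewrite <- pw_1; apply inZ_pw).
  pose proof (cong_mulL _ _ _ _ P (T_dilsub x a n) HP) as H.
  replace (1 + n)%Z with (n + 1)%Z in H by lia.
  unfold cong in *. destruct H as [z Hz]. exists (- z)%Z. rewrite opp_IZR.
  replace (pw p (-1)) with (/ P) in Hz by (rewrite <- pw_1, <- pw_opp; reflexivity).
  rewrite Rmult_minus_distr_l, <- Rmult_assoc, Rinv_r in Hz by apply P_neq0. lra.
Qed.

Lemma dil_ball l (x y a : Qp p) : ball_p (l - 1) y x -> ball_p l (subQp (dil y) a) (subQp (dil x) a).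
Proof.
  rewrite !ball_iff. replace (- (l - 1))%Z with (- l + 1)%Z by lia. intros H.
  apply (cong_eq (- l)); try apply T_range.
  eapply cong_trans. apply T_dilsub. rewrite H. apply cong_sym, T_dilsub.
Qed.

Lemma dil_support R (x a : Qp p) : ball_p R (zeroQp p) a -> ball_p R (zeroQp p) (subQp (dil x) a) ->
  ball_p (R - 1) (zeroQp p) x.
Proof.
  rewrite !ball0_iff. intros Ha Hx. replace (- (R - 1))%Z with (- R + 1)%Z by lia.
  apply T_eq_of_cong. split. lra. apply pw_pos.
  eapply cong_trans. apply T_dilsub'. rewrite Ha, Hx. apply cong_eqR. ring.
Qed.

Lemma integral_CV (F : Qp p -> C) R l (a : Qp p) : good_pair F (R, l) -> ball_p R (zeroQp p) a ->
  integral (fun x => F (subQp (dil x) a)) = (RtoC (/ P) * integral F)%C.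
Proof.
  intros GF Ha. pose proof GF as [F1 [F2 F3]]. simpl in *.
  assert (GG : good_pair (fun x => F (subQp (dil x) a)) ((R - 1)%Z, (l - 1)%Z)).
  { split; [|split]; simpl.
    - lia.
    - intros x Hx. apply dil_support with a; auto.
    - intros x y Hxy. apply F3. apply dil_ball. auto. }
  rewrite (integral_eq _ _ _ GG), (integral_eq _ _ _ GF), !RS_SR.
  replace (R - 1 - (l - 1))%Z with (R - l)%Z by lia.
  set (K := Z.to_nat (Zpos p ^ (R - l))).
  assert (HK : Z.of_nat K = (Zpos p ^ (R - l))%Z).
  { unfold K. rewrite Z2Nat.id. auto. apply Z.pow_nonneg. lia. }
  assert (HK0 : (0 < K)%nat). { assert (0 < Zpos p ^ (R - l))%Z by (apply Z.pow_pos_nonneg; lia). lia. }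
  destruct (ball_vb _ _ Ha (- l)%Z) as [A HA].
  set (H := fun m : Z => F (ofZp p (Z.of_nat (Z.to_nat m)) (- R))).
  rewrite (SR_ext K _ (fun n => H ((Z.of_nat n + - A) mod Z.of_nat K)%Z)).
  - rewrite SR_perm by auto. unfold H.
    rewrite (SR_ext K (fun n => F (ofZp p (Z.of_nat (Z.to_nat (Z.of_nat n))) (- R)))
              (fun n => F (ofZp p (Z.of_nat n) (- R)))).
    2:{ intros i _. rewrite Nat2Z.id. reflexivity. }
    rewrite Cmult_assoc, <- RtoC_mult. f_equal. f_equal.
    replace l with ((l - 1) + 1)%Z at 2 by lia. rewrite pw_add, pw_1. field. apply P_neq0.
  - intros n Hn. unfold H. apply F3. apply ball_iff.
    apply (cong_eq (- l)); [apply T_range | apply T_range |].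
    apply cong_trans with (pw p (-1) * T (- l + 1) (ofZp p (Z.of_nat n) (- (R - 1))) - T (- l) a).
    { apply T_dilsub. }
    set (m := ((Z.of_nat n + - A) mod Z.of_nat K)%Z).
    assert (Hm : (0 <= m)%Z) by (apply Z.mod_pos_bound; lia).
    rewrite Z2Nat.id by exact Hm.
    apply cong_trans with (pw p (-1) * (IZR (Z.of_nat n) * pw p (- (R - 1))) - IZR A * pw p (- R)).
    { apply cong_sub. 2: rewrite HA; apply cong_refl.
      replace (- l)%Z with (-1 + (- l + 1))%Z at 1 by lia. apply cong_mulL. apply T_ofZ. apply inZ_pw. }
    apply cong_trans with (IZR m * pw p (- R)). 2: apply cong_sym, T_ofZ.
    unfold cong, m.
    rewrite (Z.mod_eq (Z.of_nat n + - A) (Z.of_nat K)) by lia. rewrite HK.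
    exists ((Z.of_nat n + - A) / Zpos p ^ (R - l))%Z.
    rewrite minus_IZR, mult_IZR, plus_IZR, opp_IZR, <- pw_nat by lia.
    replace (- R)%Z with (- l + - (R - l))%Z by lia.
    replace (- (R - 1))%Z with (- l + - (R - l) + 1)%Z by lia.
    rewrite !pw_add, !pw_opp, pw_1. replace (pw p (-1)) with (/ P).
    field. pose proof (pw_pos (R - l)). pose proof (pw_pos l). pose proof P_neq0. repeat split; lra.
    rewrite <- pw_1, <- pw_opp. reflexivity.
Qed.


Lemma sumC_zero {A : Type} (f : A -> C) (L : list A) : (forall a, In a L -> f a = 0%C) -> sumC (map f L) = 0%C.
Proof.
  induction L; simpl; intros H. auto. rewrite H, IHL. ring. intros; apply H; auto. auto.
Qed.

Lemma ofZ_zero e : ofZp p 0 e = zeroQp p.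
Proof. apply eq_by_cong. intros n. rewrite T_zero. eapply cong_trans. apply T_ofZ. apply cong_eqR. ring. Qed.

Lemma ball_ofZ_small g k e : ((- g) <= e)%Z -> ball_p g (zeroQp p) (ofZp p k e).
Proof.
  intros H. apply ball0_iff. apply T_eq_of_cong. split. lra. apply pw_pos.
  eapply cong_trans. apply T_ofZ. unfold cong. rewrite Rminus_0_r. apply inZ_weak with e; auto. apply inZ_zpw.
Qed.

Lemma ball_dil g (x : Qp p) : ball_p g (zeroQp p) x -> ball_p (g + 1) (zeroQp p) (dil x).
Proof.
  intros H. replace (g + 1)%Z with (1 + g)%Z by lia. apply ball_mul; auto. apply ball_ofZ_small. lia.
Qed.

Lemma list_ball (L : list (Qp p)) : exists R, forall a, In a L -> ball_p R (zeroQp p) a.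
Proof.
  induction L as [|b L IH]. exists 0%Z. intros a []. destruct IH as [R HR]. exists (Z.max (- lowb b) R).
  intros a [E|Ha]. subst a. apply ball_mono with (- lowb b)%Z. lia. apply ball_lowb.
  apply ball_mono with R. lia. auto.
Qed.

Lemma rep_exists l R (x : Qp p) : (l <= R)%Z -> ball_p R (zeroQp p) x ->
  exists n : nat, (n < Z.to_nat (Zpos p ^ (R - l)))%nat /\ ball_p l (ofZp p (Z.of_nat n) (- R)) x.
Proof.
  intros HlR Hx. destruct (ball_vb _ _ Hx (- l)%Z) as [z Hz].
  pose proof (T_range x (- l)) as [T1 T2]. rewrite Hz in T1, T2.
  assert (Hz0 : (0 <= z)%Z).
  { apply le_IZR. pose proof (pw_pos (- R)). nra. }
  assert (Hzl : (z < Zpos p ^ (R - l))%Z).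
  { apply lt_IZR. rewrite <- pw_nat by lia.
    replace (- l)%Z with (- R + (R - l))%Z in T2 by lia. rewrite pw_add in T2.
    pose proof (pw_pos (- R)). nra. }
  exists (Z.to_nat z). split. lia.
  apply ball_sym, ball_iff. rewrite Hz. apply T_eq_of_cong.
  split. rewrite <- Hz. apply T_range. rewrite <- Hz. apply T_range.
  rewrite Z2Nat.id by lia. apply T_ofZ.
Qed.

Lemma NoDup_map_seq {A : Type} (f : nat -> A) K :
  (forall i j, (i < K)%nat -> (j < K)%nat -> f i = f j -> i = j) -> NoDup (map f (seq 0 K)).
Proof.
  induction K; intros H. constructor. rewrite seq_S, map_app. apply NoDup_app.
  - apply IHK. intros; apply H; auto; lia.
  - simpl. constructor. intros []. constructor.
  - intros a Ha [E|[]]. apply in_map_iff in Ha as [i [Hi1 Hi2]]. apply in_seq in Hi2.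
    subst. apply H in E; lia.
Qed.

Section Phi.
Variables (N M : Z) (phi : Qp p -> C).
Hypothesis HN : (0 <= N)%Z.
Hypothesis HD : in_D p N M phi.

Lemma phi_supp x : phi x <> 0%C -> ball_p N (zeroQp p) x.
Proof. apply HD. Qed.

Lemma phi_per_nat (n : nat) y : phi (addQp y (ofZp p (Z.of_nat n) M)) = phi y.
Proof.
  induction n.
  - simpl. rewrite ofZ_zero. f_equal. ring.
  - rewrite Nat2Z.inj_succ. unfold Z.succ. rewrite <- ofZ_add.
    replace (addQp y (addQp (ofZp p (Z.of_nat n) M) (ofZp p 1 M)))
      with (addQp (addQp y (ofZp p (Z.of_nat n) M)) (ofZp p 1 M)) by ring.
    destruct HD as [_ [Hper _]]. rewrite Hper. auto.
Qed.

Lemma phi_const x y : ball_p (- M) y x -> phi x = phi y.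
Proof.
  intros Hxy0. pose proof (proj1 (ball_shift (- M) y x) Hxy0) as Hxy. clear Hxy0.
  revert Hxy. remember (subQp x y) as z eqn:Ez. intros Hxy.
  destruct HD as [[Hlc _] _]. destruct (Hlc x) as [l Hl].
  set (l' := Z.min l (- M)).
  destruct (ball_vb _ _ Hxy (- l')%Z) as [k Hk]. replace (- - M)%Z with M in Hk by lia.
  assert (Hk0 : (0 <= k)%Z).
  { pose proof (T_range z (- l')) as [T1 _]. rewrite Hk in T1. apply le_IZR. pose proof (pw_pos M). nra. }
  set (w := subQp (ofZp p k M) z).
  assert (Hw : ball_p l (zeroQp p) w).
  { apply ball_mono with l'. lia. apply ball0_iff. apply T_eq_of_cong. split. lra. apply pw_pos.
    eapply cong_trans. apply T_sub_raw. rewrite Hk. eapply cong_trans. apply cong_sub. apply T_ofZ. apply cong_refl.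
    apply cong_eqR. ring. }
  rewrite <- (Hl w Hw).
  replace (addQp x w) with (addQp y (ofZp p (Z.of_nat (Z.to_nat k)) M)).
  apply phi_per_nat. rewrite Z2Nat.id by lia. unfold w. subst z. ring.
Qed.

Definition ak (k : nat) : Qp p := ofZp p (Z.of_nat k) (- (N + 1)).
Definition K0 : nat := ncoef p N.

Lemma K0_Z : Z.of_nat K0 = (Zpos p ^ (N + 1))%Z.
Proof. unfold K0, ncoef. rewrite Z2Nat.id. auto. apply Z.pow_nonneg. lia. Qed.

Lemma T0_ak k : (k < K0)%nat -> T 0 (ak k) = IZR (Z.of_nat k) * pw p (- (N + 1)).
Proof.
  intros Hk. unfold ak. apply T_eq_of_cong. 2: apply T_ofZ. pose proof (pw_pos (- (N + 1))).
  split. apply Rmult_le_pos. apply IZR_le. lia. lra.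
  rewrite pw_0. apply (Rmult_lt_reg_r (pw p (N + 1))). apply pw_pos.
  rewrite Rmult_assoc, <- pw_add. replace (- (N + 1) + (N + 1))%Z with 0%Z by lia. rewrite pw_0.
  rewrite Rmult_1_r, Rmult_1_l, pw_nat by lia. apply IZR_lt. rewrite <- K0_Z. lia.
Qed.

Lemma ak_Ip k : (k < K0)%nat -> in_Ip (ak k).
Proof.
  intros Hk. unfold in_Ip. apply eq_by_cong. intros n.
  eapply cong_trans. apply T_frac. rewrite T0_ak by auto. unfold ak. apply cong_sym, T_ofZ.
Qed.

Lemma ak_ball k : ball_p (N + 1) (zeroQp p) (ak k).
Proof. unfold ak. apply ball_ofZ_small. lia. Qed.

Lemma ak_inj i j : (i < K0)%nat -> (j < K0)%nat -> ak i = ak j -> i = j.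
Proof.
  intros Hi Hj E. pose proof (T0_ak i Hi) as Ei. rewrite E, T0_ak in Ei by auto.
  apply Rmult_eq_reg_r in Ei. apply eq_IZR in Ei. lia. pose proof (pw_pos (- (N + 1))). lra.
Qed.

Lemma Ip_small a : in_Ip a -> ball_p (N + 1) (zeroQp p) a -> exists k, (k < K0)%nat /\ a = ak k.
Proof.
  intros Ha Hb. destruct (ball_vb _ _ Hb 0%Z) as [z Hz].
  pose proof (T_range a 0) as [T1 T2]. rewrite Hz in T1, T2. rewrite pw_0 in T2.
  assert (Hz0 : (0 <= z)%Z). { apply le_IZR. pose proof (pw_pos (- (N + 1))). nra. }
  assert (Hzl : (z < Zpos p ^ (N + 1))%Z).
  { apply lt_IZR. rewrite <- pw_nat by lia.
    apply (Rmult_lt_reg_r (pw p (- (N + 1)))). apply pw_pos. rewrite <- pw_add.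
    replace (N + 1 + - (N + 1))%Z with 0%Z by lia. rewrite pw_0. lra. }
  exists (Z.to_nat z). split. rewrite <- K0_Z in Hzl. lia.
  apply eq_by_cong. intros n. unfold ak. rewrite Z2Nat.id by lia.
  rewrite <- Ha at 1. eapply cong_trans. apply T_frac. rewrite Hz. apply cong_sym, T_ofZ.
Qed.

Lemma Ip_big a x : in_Ip a -> ~ ball_p (N + 1) (zeroQp p) a -> ball_p N (zeroQp p) x ->
  phi (subQp (dil x) a) = 0%C.
Proof.
  intros Ha Hb Hx. destruct (classic (phi (subQp (dil x) a) = 0%C)) as [E|E]; auto.
  exfalso. apply Hb. apply phi_supp in E.
  replace a with (addQp (dil x) (oppQp (subQp (dil x) a))) by ring.
  apply ball_add. apply ball_dil; auto. apply ball_opp. apply ball_mono with N. lia. auto.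
Qed.

Lemma outside_terms x k : (k < K0)%nat -> ~ ball_p N (zeroQp p) x -> phi (subQp (dil x) (ak k)) = 0%C.
Proof.
  intros Hk Hx. destruct (classic (phi (subQp (dil x) (ak k)) = 0%C)) as [E|E]; auto.
  exfalso. apply Hx. apply phi_supp in E. replace N with (N + 1 - 1)%Z by lia.
  apply dil_support with (ak k). apply ak_ball. apply ball_mono with N. lia. auto.
Qed.

Definition Sphi (h : nat -> C) (x : Qp p) : C :=
  sumC (map (fun k => (h k * phi (subQp (dil x) (ak k)))%C) (seq 0 K0)).

Lemma re_scal r z : Re (RtoC r * z)%C = r * Re z.
Proof. unfold Cmult, RtoC, Re. simpl. ring. Qed.

Lemma part1 : refinable phi -> exists h : nat -> C, forall x, phi x = Sphi h x.
Proof.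
  intros [alpha Hal]. exists (fun k => alpha (ak k)). intros x0.
  apply NNPP. intros Hne.
  destruct (classic (ball_p N (zeroQp p) x0)) as [Hin|Hout].
  2:{ apply Hne. destruct (classic (phi x0 = 0%C)) as [E|E].
      2: exfalso; apply Hout, phi_supp, E.
      rewrite E. unfold Sphi. rewrite sumC_zero. auto.
      intros k Hk. apply in_seq in Hk. rewrite outside_terms by (auto; lia). ring. }
  pose (L1 := Z.min (- M - 1) N).
  assert (HD0 : (phi x0 - Sphi (fun k => alpha (ak k)) x0)%C <> 0%C).
  { intros E. apply Hne. apply (f_equal (fun z => z + Sphi (fun k => alpha (ak k)) x0)%C) in E.
    rewrite Cplus_0_l in E. rewrite <- E. ring. }
  pose (c := pw p L1 * Cmod (phi x0 - Sphi (fun k => alpha (ak k)) x0)%C ^ 2).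
  assert (Hc : 0 < c).
  { unfold c. apply Rmult_lt_0_compat. apply pw_pos. apply pow_lt. apply Cmod_gt_0. auto. }
  destruct (Hal (sqrt c) (sqrt_lt_R0 c Hc)) as [F [HF1 [HF2 HF3]]].
  pose (decA := fun a b : Qp p => excluded_middle_informative (a = b)).
  pose (aL := map ak (seq 0 K0)).
  pose (fb := fun a => if excluded_middle_informative (In a aL) then false else true).
  pose (Fr := filter fb (nodup decA F)).
  assert (Hfb : forall a, fb a = true <-> ~ In a aL).
  { intros a. unfold fb. destruct (excluded_middle_informative (In a aL)); split; intros; auto; try discriminate; tauto. }
  assert (HFr : forall a, In a Fr <-> In a F /\ ~ In a aL).
  { intros a. unfold Fr. rewrite filter_In, nodup_In, Hfb. tauto. }
  assert (HaL : forall a, In a aL <-> exists k, (k < K0)%nat /\ a = ak k).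
  { intros a. unfold aL. rewrite in_map_iff. split.
    - intros [k [E Hk]]. apply in_seq in Hk. exists k. split. lia. auto.
    - intros [k [Hk E]]. exists k. split. auto. apply in_seq. lia. }
  specialize (HF3 (aL ++ Fr)).
  assert (NG : NoDup (aL ++ Fr)).
  { apply NoDup_app.
    - apply NoDup_map_seq. intros i j Hi Hj. apply ak_inj; auto.
    - apply NoDup_filter. apply NoDup_nodup.
    - intros a Ha HaF. apply HFr in HaF. tauto. }
  assert (IG : forall a, In a (aL ++ Fr) -> in_Ip a).
  { intros a Ha. apply in_app_or in Ha as [Ha|Ha].
    - apply HaL in Ha as [k [Hk ->]]. apply ak_Ip; auto.
    - apply HFr in Ha. apply HF2. tauto. }
  assert (IFG : incl F (aL ++ Fr)).
  { intros a Ha. apply in_or_app. destruct (classic (In a aL)). auto. right. apply HFr. auto. }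
  specialize (HF3 NG IG IFG). unfold l2norm in HF3. change (mulQp (ofZp p 1 (-1))) with dil in HF3.
  destruct (list_ball (aL ++ Fr)) as [RG HRG].
  pose (Rg := Z.max N RG).
  assert (HgD : forall x, ball_p N (zeroQp p) x ->
     (phi x - sumC (map (fun a => alpha a * phi (subQp (dil x) a)) (aL ++ Fr)))%C
     = (phi x - Sphi (fun k => alpha (ak k)) x)%C).
  { intros x Hx. rewrite map_app, sumC_app. rewrite (sumC_zero _ Fr).
    - f_equal. rewrite Cplus_0_r. unfold aL. rewrite map_map. reflexivity.
    - intros a Ha. apply HFr in Ha as [Ha1 Ha2].
      assert (Hb : ~ ball_p (N + 1) (zeroQp p) a).
      { intros Hb. apply Ha2. apply HaL. apply Ip_small; auto. }
      rewrite (Ip_big a x); auto. ring. }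
  assert (GP : good_pair (fun x => RtoC (Cmod (phi x - sumC (map (fun a => alpha a *
       phi (subQp (dil x) a)) (aL ++ Fr)))%C ^ 2)) (Rg, L1)).
  { split; [|split]; simpl.
    - unfold L1, Rg. lia.
    - intros x Hx. apply NNPP. intros Hb. apply Hx.
      assert (E1 : phi x = 0%C).
      { destruct (classic (phi x = 0%C)) as [E|E]; auto. exfalso. apply Hb.
        apply ball_mono with N. unfold Rg; lia. apply phi_supp; auto. }
      rewrite E1, sumC_zero. replace (0 - 0)%C with (RtoC 0) by ring. rewrite Cmod_0.
      simpl. rewrite Rmult_0_l. reflexivity.
      intros a Ha. destruct (classic (phi (subQp (dil x) a) = 0%C)) as [E|E].
      rewrite E. ring. exfalso. apply Hb.
      apply ball_mono with (Rg - 1)%Z. lia. apply dil_support with a.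
      apply ball_mono with RG. unfold Rg; lia. auto.
      apply ball_mono with N. unfold Rg; lia. apply phi_supp; auto.
    - intros x y Hxy.
      assert (E1 : phi x = phi y) by (apply phi_const; apply ball_mono with L1; [unfold L1; lia | auto]).
      assert (E2 : map (fun a => (alpha a * phi (subQp (dil x) a))%C) (aL ++ Fr) =
                   map (fun a => (alpha a * phi (subQp (dil y) a))%C) (aL ++ Fr)).
      { apply map_ext. intros a. rewrite (phi_const (subQp (dil x) a) (subQp (dil y) a)). reflexivity.
        apply dil_ball. apply ball_mono with L1. unfold L1; lia. auto. }
      rewrite E1, E2. reflexivity. }
  rewrite (integral_eq _ _ _ GP), RS_SR, re_scal in HF3.
  destruct (rep_exists L1 Rg x0) as [n0 [Hn0 Hrep]]. unfold L1, Rg; lia.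
  apply ball_mono with N. unfold Rg; lia. auto.
  match type of HF3 with sqrt (pw p L1 * Re (SR ?K ?F)) < _ =>
    pose proof (SR_re_ge K F n0) as Hge end.
  assert (Hfix := proj2 (proj2 GP) x0 _ Hrep). cbv beta in Hfix, Hge.
  rewrite <- Hfix in Hge. rewrite HgD in Hge by auto.
  assert (c <= pw p L1 * Re (SR (Z.to_nat (Zpos p ^ (Rg - L1)))
     (fun n => RtoC (Cmod (phi (ofZp p (Z.of_nat n) (- Rg)) - sumC (map (fun a => alpha a *
       phi (subQp (dil (ofZp p (Z.of_nat n) (- Rg))) a)) (aL ++ Fr)))%C ^ 2)))).
  { unfold c. apply Rmult_le_compat_l. left; apply pw_pos. apply Hge; auto.
    intros j _. simpl. apply pow2_ge_0. }
  apply sqrt_le_1_alt in H. lra.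
Qed.


Lemma phi_gp : good_pair phi (N, Z.min (- M) N).
Proof.
  split; [|split]; simpl. lia. apply phi_supp.
  intros x y H. apply phi_const. apply ball_mono with (Z.min (- M) N). lia. auto.
Qed.

Lemma chi_const (u : Qp p) A x y : ball_p A (zeroQp p) u -> ball_p (- A) y x ->
  chi (mulQp u x) = chi (mulQp u y).
Proof.
  intros Hu Hxy. replace (mulQp u x) with (addQp (mulQp u y) (mulQp u (subQp x y))) by ring.
  rewrite chi_add. rewrite (chi_ball0 (mulQp u (subQp x y))). ring.
  replace 0%Z with (A + - A)%Z by lia. apply ball_mul. exact Hu. apply (proj1 (ball_shift (- A) y x)). exact Hxy.
Qed.

Lemma gp_chiphi (eta : Qp p) : good_pair (fun x => (chi (mulQp eta x) * phi x)%C) (N, Z.min (Z.min (- M) N) (lowb eta)).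
Proof.
  apply gp_mulfun. apply phi_gp. intros x y H. apply chi_const with (- lowb eta)%Z.
  apply ball_lowb. replace (- - lowb eta)%Z with (lowb eta) by lia. auto.
Qed.

Lemma ft_eq (eta : Qp p) (f : Qp p -> C) : ft f eta = integral (fun x => (chi (mulQp eta x) * f x)%C).
Proof. reflexivity. Qed.

Lemma sumC_mul_in {A : Type} (c : C) (h : A -> C) (t : A -> C) (L : list A) :
  (c * sumC (map (fun k => h k * t k) L))%C = sumC (map (fun k => h k * (c * t k)) L)%C.
Proof. induction L; simpl. ring. rewrite <- IHL. ring. Qed.

Lemma sumC_mul_out {A : Type} (c : C) (f : A -> C) (L : list A) :
  sumC (map (fun k => f k * c) L)%C = (sumC (map f L) * c)%C.
Proof. induction L; simpl. ring. rewrite IHL. ring. Qed.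

Lemma ofZ_one_m1 : mulQp (ofZp p 1 1) (ofZp p 1 (-1)) = oneQp.
Proof. rewrite ofZ_mul. reflexivity. Qed.

Lemma key_id (eta x a : Qp p) :
  mulQp eta x = addQp (mulQp (mulQp (ofZp p 1 1) eta) (subQp (dil x) a)) (mulQp (mulQp (ofZp p 1 1) eta) a).
Proof.
  unfold dil. transitivity (mulQp (mulQp (ofZp p 1 1) (ofZp p 1 (-1))) (mulQp eta x)).
  rewrite ofZ_one_m1. ring. ring.
Qed.

Lemma m0_id (eta : Qp p) k :
  mulQp (ofZp p (Z.of_nat k) 0) (mulQp eta (ofZp p 1 (- N))) = mulQp (mulQp (ofZp p 1 1) eta) (ak k).
Proof.
  unfold ak. transitivity (mulQp eta (mulQp (ofZp p (Z.of_nat k) 0) (ofZp p 1 (- N)))). ring.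
  transitivity (mulQp eta (mulQp (ofZp p 1 1) (ofZp p (Z.of_nat k) (- (N + 1))))). 2: ring.
  rewrite !ofZ_mul. f_equal. f_equal; lia.
Qed.

Lemma ft_step (h : nat -> C) (Hh : forall x, phi x = Sphi h x) (eta : Qp p) :
  ft phi eta = (m0 p N h (mulQp eta (ofZp p 1 (- N))) * ft phi (mulQp (ofZp p 1 1) eta))%C.
Proof.
  set (eta' := mulQp (ofZp p 1 1) eta).
  rewrite ft_eq.
  assert (E1 : (fun x => (chi (mulQp eta x) * phi x)%C) =
     (fun x => sumC (map (fun k => (h k * (chi (mulQp eta x) * phi (subQp (dil x) (ak k)))))%C (seq 0 K0)))).
  { apply functional_extensionality. intros x. rewrite Hh. unfold Sphi. apply sumC_mul_in. }
  rewrite E1. clear E1.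
  assert (Hgk : forall k, good_pair (fun x => (chi (mulQp eta x) * phi (subQp (dil x) (ak k)))%C)
                      ((N + 1 - 1)%Z, (Z.min (Z.min (- M) N) (lowb eta') - 1)%Z)).
  { intros k. split; [|split]; simpl.
    - lia.
    - intros x Hx. apply dil_support with (ak k). apply ak_ball.
      apply ball_mono with N. lia. apply phi_supp. intros E. apply Hx. rewrite E. ring.
    - intros x y Hxy. rewrite (key_id eta x (ak k)), (key_id eta y (ak k)). fold eta'.
      rewrite !chi_add. rewrite (phi_const (subQp (dil x) (ak k)) (subQp (dil y) (ak k))).
      rewrite (chi_const eta' (- lowb eta') (subQp (dil x) (ak k)) (subQp (dil y) (ak k))). reflexivity.
      apply ball_lowb. apply dil_ball. apply ball_mono with (Z.min (Z.min (- M) N) (lowb eta') - 1)%Z. lia. auto.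
      apply dil_ball. apply ball_mono with (Z.min (Z.min (- M) N) (lowb eta') - 1)%Z. lia. auto. }
  rewrite integral_sum.
  2:{ intros k _. exists (N + 1 - 1)%Z, (Z.min (Z.min (- M) N) (lowb eta') - 1)%Z. apply gp_scal. apply Hgk. }
  rewrite (map_ext _ (fun k => (h k * (RtoC (/ P) * (chi (mulQp eta' (ak k)) * ft phi eta')))%C)).
  - unfold m0. rewrite <- sumC_mul_in. rewrite <- Cmult_assoc. f_equal.
    rewrite <- sumC_mul_out. f_equal. apply map_ext. intros k. rewrite m0_id. fold eta'. ring.
  - intros k. rewrite integral_scal. 2: exists (N + 1 - 1)%Z, (Z.min (Z.min (- M) N) (lowb eta') - 1)%Z; apply Hgk.
    f_equal.
    assert (E2 : (fun x => (chi (mulQp eta x) * phi (subQp (dil x) (ak k)))%C) =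
       (fun x => (fun y => (chi (mulQp eta' (ak k)) * (chi (mulQp eta' y) * phi y))%C) (subQp (dil x) (ak k)))).
    { apply functional_extensionality. intros x. rewrite (key_id eta x (ak k)). fold eta'. rewrite chi_add. ring. }
    rewrite E2. rewrite (integral_CV (fun y => (chi (mulQp eta' (ak k)) * (chi (mulQp eta' y) * phi y))%C) (N + 1) (Z.min (Z.min (- M) N) (lowb eta'))).
    + f_equal. rewrite integral_scal. reflexivity.
      exists N, (Z.min (Z.min (- M) N) (lowb eta')). apply gp_chiphi.
    + apply gp_scal. apply gp_mono with N (Z.min (Z.min (- M) N) (lowb eta')). apply gp_chiphi. lia. lia.
    + apply ak_ball.
Qed.

Lemma prodC_S n f : prodC (S n) f = (prodC n f * f n)%C.
Proof.
  unfold prodC. rewrite seq_S, map_app, fold_right_app. simpl.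
  generalize (map f (seq 0 n)). intros l. induction l; simpl. ring. rewrite IHl. ring.
Qed.

Lemma ft_iter (h : nat -> C) (Hh : forall x, phi x = Sphi h x) (xi : Qp p) n :
  ft phi xi = (prodC n (fun j => m0 p N h (mulQp xi (ofZp p 1 (Z.of_nat j - N)))) *
               ft phi (mulQp xi (ofZp p 1 (Z.of_nat n))))%C.
Proof.
  induction n.
  - simpl. unfold prodC. simpl. replace (mulQp xi (ofZp p 1 0)) with xi. ring.
    change (ofZp p 1 0) with oneQp. ring.
  - rewrite IHn, prodC_S, (ft_step h Hh).
    replace (mulQp (mulQp xi (ofZp p 1 (Z.of_nat n))) (ofZp p 1 (- N))) with (mulQp xi (ofZp p 1 (Z.of_nat n - N))).
    replace (mulQp (ofZp p 1 1) (mulQp xi (ofZp p 1 (Z.of_nat n)))) with (mulQp xi (ofZp p 1 (Z.of_nat (S n)))).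
    ring.
    + transitivity (mulQp xi (mulQp (ofZp p 1 1) (ofZp p 1 (Z.of_nat n)))). rewrite ofZ_mul. f_equal. f_equal. lia. ring.
    + transitivity (mulQp xi (mulQp (ofZp p 1 (Z.of_nat n)) (ofZp p 1 (- N)))). rewrite ofZ_mul. f_equal. ring.
Qed.

Lemma ft_eventually (xi : Qp p) n : (- lowb xi + N <= Z.of_nat n)%Z ->
  ft phi (mulQp xi (ofZp p 1 (Z.of_nat n))) = ft phi (zeroQp p).
Proof.
  intros Hn. rewrite !ft_eq. f_equal. apply functional_extensionality. intros x.
  replace (mulQp (zeroQp p) x) with (zeroQp p) by ring.
  rewrite (chi_ball0 (zeroQp p)). 2: apply ball0_iff, T_zero.
  destruct (classic (phi x = 0%C)) as [E|E]. rewrite E. ring.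
  rewrite chi_ball0. ring. apply ball_mono with ((- lowb xi + - Z.of_nat n) + N)%Z. lia.
  apply ball_mul. apply ball_mul. apply ball_lowb. apply ball_ofZ_small. lia. apply phi_supp; auto.
Qed.

Lemma part2 (h : nat -> C) (Hh : forall x, phi x = Sphi h x) (xi : Qp p) :
  filterlim (fun n : nat => (ft phi (zeroQp p) *
                    prodC n (fun j => m0 p N h (mulQp xi (ofZp p 1 (Z.of_nat j - N)))))%C)
                 eventually (locally (ft phi xi)).
Proof.
  apply (filterlim_ext_loc (fun _ => ft phi xi)).
  - exists (Z.to_nat (- lowb xi + N)). intros n Hn.
    rewrite (ft_iter h Hh xi n), ft_eventually. ring. lia.
  - apply filterlim_const.
Qed.

End Phi.

End QP.


Theorem corollary3 (p : positive) (M N : Z) (phi : Qp p -> C) :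
  prime (Zpos p) -> (0 <= N)%Z ->
  in_D p N M phi -> refinable phi -> ft phi (zeroQp p) <> 0%C ->
  exists h : nat -> C,
    (forall x : Qp p,
       phi x = sumC (map (fun k => (h k *
         phi (subQp (mulQp (ofZp p 1 (-1)) x) (ofZp p (Z.of_nat k) (- (N + 1)))))%C)
         (seq 0 (ncoef p N)))) /\
    (forall xi : Qp p,
       filterlim (fun n : nat => (ft phi (zeroQp p) *
                    prodC n (fun j => m0 p N h (mulQp xi (ofZp p 1 (Z.of_nat j - N)))))%C)
                 eventually (locally (ft phi xi))).
Proof.
  intros Hprime HN HD Href _.
  assert (hp : (1 < Zpos p)%Z) by (destruct Hprime as [H1 _]; exact H1).
  destruct (part1 p hp N M phi HN HD Href) as [h Hh]. exists h. split.
  - intros x. exact (Hh x).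
  - intros xi. exact (part2 p hp N M phi HD h Hh xi).
Qed.
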